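(* Let $\omega:(0,\infty)\to[0,\infty)$ be a twice differentiable monotone function with $|\omega^{(j)}(\lambda)|\le a_0\lambda^{-j}$ for $j=0,1,2$ and all $\lambda>0$. Then there is a constant $C_0$ depending only on $a_0$ such that for every positive integer $m$, every $1\le k\le m$, every choice of $\sigma_1\ge\sigma_2\ge\dots\ge\sigma_m\ge0$ and $b_1,\dots,b_m>0$, and both choices of sign, \[ \Bigl|\int_0^\infty e^{\frac12 i\lambda^2}e^{\pm i\sum_{j=1}^mb_j\sqrt{\lambda^2+\sigma_j}}\,\frac{\lambda}{\sqrt{\lambda^2+\sigma_k}}\,\omega(\lambda)\,d\lambda\Bigr|\le C_0\min\Bigl[(1+\sigma_1)^{1/4},\ m^{3/2}b_k^{-1}\max_\ell b_\ell\Bigr], \] \[ \Bigl|\int_0^\infty e^{\frac12 i\lambda^2}e^{\pm i\sum_{j=1}^mb_j\sqrt{\lambda^2+\sigma_j}}\,\omega(\lambda)\,d\lambda\Bigr|\le C_0(1+\sigma_1)^{1/4}. \] *)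

(* Defs.v *)
From Stdlib Require Import Reals.
From Coquelicot Require Import Coquelicot.
Open Scope R_scope.

(* max_{1 <= l <= n} b l  (with value 0 for n = 0; only used for n >= 1 with b > 0) *)
Fixpoint max_1n (b : nat -> R) (n : nat) : R :=
  match n with
  | O => 0
  | S p => Rmax (max_1n b p) (b (S p))
  end.

Definition phase (s : R) (m : nat) (b sigma : nat -> R) (l : R) : R :=
  l ^ 2 / 2 + s * sum_n_m (fun j => b j * sqrt (l ^ 2 + sigma j)) 1 m.

Definition osc (ph g : R -> R) : R -> C :=
  fun l => (g l * cos (ph l), g l * sin (ph l)).

Definition improper_int_0_oo (f : R -> C) (I : C) : Prop :=
  is_RInt_gen f (at_right 0) (Rbar_locally p_infty) I.

(* Main.v *)
Require Import Defs.
From Stdlib Require Import Reals Lra Lia.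
From Coquelicot Require Import Coquelicot.
Open Scope R_scope.

Lemma c_mult (f g : R -> R) x : continuous f x -> continuous g x -> continuous (fun y => f y * g y) x.
Proof. intros; apply (continuous_mult f g); auto. Qed.
Lemma c_plus (f g : R -> R) x : continuous f x -> continuous g x -> continuous (fun y => f y + g y) x.
Proof. intros; apply (continuous_plus f g); auto. Qed.
Lemma c_minus (f g : R -> R) x : continuous f x -> continuous g x -> continuous (fun y => f y - g y) x.
Proof. intros; apply (continuous_minus f g); auto. Qed.
Lemma c_opp (f : R -> R) x : continuous f x -> continuous (fun y => - f y) x.
Proof. intros; apply (continuous_opp f); auto. Qed.
Lemma c_const (c x : R) : continuous (fun _ : R => c) x.
Proof. apply continuous_const. Qed.
Lemma c_id (x : R) : continuous (fun y : R => y) x.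
Proof. apply continuous_id. Qed.
Lemma c_cos (f : R -> R) x : continuous f x -> continuous (fun y => cos (f y)) x.
Proof. intros; apply continuous_cos_comp; auto. Qed.
Lemma c_sin (f : R -> R) x : continuous f x -> continuous (fun y => sin (f y)) x.
Proof. intros. apply (continuous_comp f sin); auto.
  apply continuity_pt_filterlim. apply continuity_sin. Qed.
Lemma c_abs (f : R -> R) x : continuous f x -> continuous (fun y => Rabs (f y)) x.
Proof. intros; apply continuous_Rabs_comp; auto. Qed.
Lemma c_sqrt (f : R -> R) x : continuous f x -> continuous (fun y => sqrt (f y)) x.
Proof. intros; apply continuous_sqrt_comp; auto. Qed.
Lemma c_inv (f : R -> R) x : continuous f x -> f x <> 0 -> continuous (fun y => / f y) x.
Proof. intros; apply continuous_Rinv_comp; auto. Qed.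
Lemma c_div (f g : R -> R) x : continuous f x -> continuous g x -> g x <> 0 -> continuous (fun y => f y / g y) x.
Proof. intros. unfold Rdiv. apply c_mult; auto. apply c_inv; auto. Qed.
Lemma c_pow2 (f : R -> R) x : continuous f x -> continuous (fun y => f y ^ 2) x.
Proof. intros. apply (continuous_ext (fun y => f y * f y)). intros; simpl; ring. apply c_mult; auto. Qed.

Ltac cont_hyp := first [ assumption |
   match goal with H : forall z, _ -> continuous ?f z |- continuous ?f ?y => apply H; solve [auto | lra] end |
   match goal with H : forall z, _ -> continuous ?f z |- continuous (fun w => ?f w) ?y => apply H; solve [auto | lra] end ].
Ltac cont_step := lazymatch goal with
 | |- continuous (fun _ => ?c) _ => apply c_const
 | |- continuous (fun y => y) _ => apply c_id
 | |- continuous (fun y => @?A y + @?B y) _ => apply (c_plus A B)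
 | |- continuous (fun y => @?A y - @?B y) _ => apply (c_minus A B)
 | |- continuous (fun y => @?A y * @?B y) _ => apply (c_mult A B)
 | |- continuous (fun y => @?A y / @?B y) _ => apply (c_div A B)
 | |- continuous (fun y => - @?A y) _ => apply (c_opp A)
 | |- continuous (fun y => / @?A y) _ => apply (c_inv A)
 | |- continuous (fun y => cos (@?A y)) _ => apply (c_cos A)
 | |- continuous (fun y => sin (@?A y)) _ => apply (c_sin A)
 | |- continuous (fun y => Rabs (@?A y)) _ => apply (c_abs A)
 | |- continuous (fun y => sqrt (@?A y)) _ => apply (c_sqrt A)
 | |- continuous (fun y => (@?A y) ^ 2) _ => apply (c_pow2 A)
 | |- continuous _ _ => cont_hyp
 end.
Ltac cont := repeat (match goal with |- continuous _ _ => cont_step end).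

Lemma is_derive_cont (f : R -> R) x l : is_derive f x l -> continuous f x.
Proof. intros H. apply (ex_derive_continuous (K:=R_AbsRing) (V:=R_NormedModule)). exists l; exact H. Qed.

Lemma deriv_nonneg_of_incr (f : R -> R) x l :
  0 < x -> (forall u v, 0 < u -> u <= v -> f u <= f v) -> is_derive f x l -> 0 <= l.
Proof.
  intros Hx Hm Hd. apply is_derive_Reals in Hd.
  destruct (Rle_or_lt 0 l) as [|Hl]; auto.
  destruct (Hd (- l / 2)) as [d Hdd]; [lra|].
  set (h := Rmin (d/2) 1).
  assert (Hh : 0 < h) by (unfold h; apply Rmin_pos; [destruct d; simpl; lra | lra]).
  assert (Hh2 : h < d) by (unfold h; destruct d as [d dp]; simpl; generalize (Rmin_l (d/2) 1); lra).
  specialize (Hdd h (Rgt_not_eq _ _ Hh)). rewrite Rabs_pos_eq in Hdd by lra.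
  specialize (Hdd Hh2).
  assert (f x <= f (x + h)) by (apply Hm; lra).
  assert (0 <= (f (x + h) - f x) / h) by (apply Rdiv_le_0_compat; lra).
  apply Rabs_lt_between in Hdd. lra.
Qed.

Lemma deriv_nonpos_of_decr (f : R -> R) x l :
  0 < x -> (forall u v, 0 < u -> u <= v -> f v <= f u) -> is_derive f x l -> l <= 0.
Proof.
  intros Hx Hm Hd.
  assert (0 <= - l). { apply (deriv_nonneg_of_incr (fun y => - f y) x); auto.
    intros u v Hu Huv; specialize (Hm u v Hu Huv); lra.
    apply (is_derive_opp f x l) in Hd. exact Hd. }
  lra.
Qed.

Lemma Rabs_sin_le_1 x : Rabs (sin x) <= 1.
Proof. apply Rabs_le. generalize (SIN_bound x). lra. Qed.
Lemma Rabs_cos_le_1 x : Rabs (cos x) <= 1.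
Proof. apply Rabs_le. generalize (COS_bound x). lra. Qed.

Lemma exRI (f : R -> R) a b : a <= b -> (forall x, a <= x <= b -> continuous f x) -> ex_RInt f a b.
Proof.
  intros Hab H. apply (ex_RInt_continuous (V:=R_CompleteNormedModule)). rewrite Rmin_left, Rmax_right by lra. auto.
Qed.

Lemma RInt_abs_le (f g : R -> R) a b : a <= b -> ex_RInt f a b -> ex_RInt g a b ->
  (forall x, a <= x <= b -> Rabs (f x) <= g x) -> Rabs (RInt f a b) <= RInt g a b.
Proof.
  intros Hab Hf Hg H. eapply Rle_trans. apply abs_RInt_le; auto.
  apply RInt_le; auto. apply ex_RInt_norm; auto. intros; apply H; lra.
Qed.

Lemma FDk (phi r h h' g g' : R -> R) (a b th d G V k : R) :
  a <= b -> 0 < d -> (k = 1 \/ k = -1) ->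
  (forall x, a <= x <= b -> is_derive phi x (r x * h x)) ->
  (forall x, a <= x <= b -> is_derive h x (h' x)) ->
  (forall x, a <= x <= b -> is_derive g x (g' x)) ->
  (forall x, a <= x <= b -> continuous r x /\ continuous h' x /\ continuous g' x) ->
  ((forall x, a <= x <= b -> d <= h x) \/ (forall x, a <= x <= b -> h x <= - d)) ->
  (forall x, a <= x <= b -> 0 <= k * h' x) ->
  (forall x, a <= x <= b -> Rabs (g x) <= G) ->
  RInt (fun x => Rabs (g' x)) a b <= V ->
  Rabs (RInt (fun x => cos (phi x + th) * (r x * g x)) a b) <= (3*G + V)/d.
Proof.
  intros Hab Hd Hk1 Hphi Hh Hg Hc Hsg Hk HG HV.
  assert (Habs : forall x, a <= x <= b -> d <= Rabs (h x)).
  { intros x Hx. destruct Hsg as [H|H]; specialize (H x Hx).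
    rewrite Rabs_pos_eq; lra. rewrite Rabs_left; lra. }
  assert (Hne : forall x, a <= x <= b -> h x <> 0).
  { intros x Hx Hz. specialize (Habs x Hx). rewrite Hz, Rabs_R0 in Habs. lra. }
  assert (Hcphi : forall x, a <= x <= b -> continuous phi x) by (intros; eapply is_derive_cont; eauto).
  assert (Hch : forall x, a <= x <= b -> continuous h x) by (intros; eapply is_derive_cont; eauto).
  assert (Hcg : forall x, a <= x <= b -> continuous g x) by (intros; eapply is_derive_cont; eauto).
  set (F := fun x => sin (phi x + th) * g x / h x).
  set (E := fun x => sin (phi x + th) * (g' x / h x - g x * h' x / (h x * h x))).
  set (M := fun x => cos (phi x + th) * (r x * g x)).
  assert (HcE : forall x, a <= x <= b -> continuous E x).
  { intros x Hx. destruct (Hc x Hx) as (?&?&?). unfold E. cont; repeat (apply Rmult_integral_contrapositive; split); auto. }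
  assert (HcM : forall x, a <= x <= b -> continuous M x).
  { intros x Hx. destruct (Hc x Hx) as (?&?&?). unfold M. cont. }
  assert (HF : is_RInt (fun x => M x + E x) a b (F b - F a)).
  { apply (is_RInt_derive F (fun x => M x + E x)).
    - intros x Hx. rewrite Rmin_left, Rmax_right in Hx by lra.
      unfold F. auto_derive.
      + repeat split; try (eexists; eauto); auto.
      + replace (Derive (fun x0 => phi x0) x) with (r x * h x) by (symmetry; apply is_derive_unique; auto).
        replace (Derive (fun x0 => g x0) x) with (g' x) by (symmetry; apply is_derive_unique; auto).
        replace (Derive (fun x0 => h x0) x) with (h' x) by (symmetry; apply is_derive_unique; auto).
        unfold M, E. field. auto.
    - intros x Hx. rewrite Rmin_left, Rmax_right in Hx by lra. apply c_plus; auto. }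
  assert (exM : ex_RInt M a b) by (apply exRI; auto).
  assert (exE : ex_RInt E a b) by (apply exRI; auto).
  assert (HRM : RInt M a b = (F b - F a) - RInt E a b).
  { apply (is_RInt_unique (V:=R_CompleteNormedModule)) in HF. rewrite <- HF.
    assert (Hp := RInt_plus M E a b exM exE). unfold plus in Hp; simpl in Hp. rewrite Hp. lra. }
  assert (HFb : forall x, a <= x <= b -> Rabs (F x) <= G / d).
  { intros x Hx. unfold F. unfold Rdiv. rewrite !Rabs_mult, Rabs_inv.
    assert (Rabs (sin (phi x + th)) <= 1) by apply Rabs_sin_le_1.
    assert (0 <= Rabs (g x)) by apply Rabs_pos.
    assert (/ Rabs (h x) <= / d) by (apply Rinv_le_contravar; auto).
    assert (0 < / Rabs (h x)) by (apply Rinv_0_lt_compat; specialize (Habs x Hx); lra).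
    specialize (HG x Hx).
    apply Rle_trans with (1 * G * / d).
    apply Rmult_le_compat; try apply Rmult_le_compat; try lra; try apply Rabs_pos.
    apply Rmult_le_pos; apply Rabs_pos.
    lra. }
  set (B := fun x => Rabs (g' x) / d + G * (k * (h' x / (h x * h x)))).
  assert (HB : forall x, a <= x <= b -> Rabs (E x) <= B x).
  { intros x Hx. unfold E, B.
    specialize (Hk x Hx). specialize (HG x Hx). specialize (Habs x Hx). specialize (Hne x Hx).
    rewrite Rabs_mult.
    assert (Rabs (sin (phi x + th)) <= 1) by apply Rabs_sin_le_1.
    apply Rle_trans with (1 * Rabs (g' x / h x - g x * h' x / (h x * h x))).
    { apply Rmult_le_compat_r; [apply Rabs_pos | auto]. }
    rewrite Rmult_1_l.
    eapply Rle_trans; [ apply Rabs_triang | ].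
    rewrite Rabs_Ropp. apply Rplus_le_compat.
    - unfold Rdiv; rewrite Rabs_mult, Rabs_inv.
      apply Rmult_le_compat_l; [apply Rabs_pos| apply Rinv_le_contravar; lra].
    - unfold Rdiv; rewrite !Rabs_mult, Rabs_inv.
      assert (Hhh: 0 < h x * h x) by (generalize (Rsqr_pos_lt (h x) Hne); unfold Rsqr; auto).
      rewrite (Rabs_pos_eq (h x * h x)) by lra.
      assert (Hr : Rabs (h' x) = k * h' x).
      { destruct Hk1; subst k. rewrite Rabs_pos_eq; lra. rewrite Rabs_left1; lra. }
      rewrite Hr.
      assert (0 < / (h x * h x)) by (apply Rinv_0_lt_compat; lra).
      apply Rle_trans with (G * (k * h' x) * / (h x * h x)).
      + apply Rmult_le_compat_r; [lra|]. apply Rmult_le_compat_r; [lra|]; auto.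
      + right; ring. }
  assert (HcB : forall x, a <= x <= b -> continuous B x).
  { intros x Hx; destruct (Hc x Hx) as (?&?&?); unfold B; cont; try lra; try (apply Rmult_integral_contrapositive; split; auto). }
  assert (Hinv : is_RInt (fun x => h' x / (h x * h x)) a b ((- / h b) - (- / h a))).
  { apply (is_RInt_derive (fun x => - / h x)); rewrite Rmin_left, Rmax_right by lra.
    - intros x Hx; auto_derive.
      + split; [eexists; eauto | split; auto].
      + replace (Derive (fun x0 => h x0) x) with (h' x) by (symmetry; apply is_derive_unique; auto).
        field; auto.
    - intros x Hx; destruct (Hc x Hx) as (?&?&?); cont; try (apply Rmult_integral_contrapositive; split; auto). }
  assert (ex1 : ex_RInt (fun x => Rabs (g' x)) a b).
  { apply exRI; auto; intros x Hx; destruct (Hc x Hx) as (?&?&?); cont. }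
  assert (ex2 : ex_RInt (fun x => h' x / (h x * h x)) a b) by (eexists; eauto).
  assert (HRB : RInt B a b = RInt (fun x => Rabs (g' x)) a b / d + G * (k * ((- / h b) - (- / h a)))).
  { apply (is_RInt_unique (V:=R_CompleteNormedModule)).
    apply (is_RInt_ext (fun x => plus (scal (/d) (Rabs (g' x))) (scal (G * k) (h' x / (h x * h x))))).
    { intros; unfold B, plus, scal; simpl; unfold mult; simpl; unfold Rdiv; ring. }
    replace (RInt (fun x => Rabs (g' x)) a b / d + G * (k * ((- / h b) - (- / h a))))
      with (plus (scal (/d) (RInt (fun x => Rabs (g' x)) a b)) (scal (G * k) ((- / h b) - (- / h a))))
      by (unfold plus, scal; simpl; unfold mult; simpl; unfold Rdiv; ring).
    apply (is_RInt_plus (V:=R_NormedModule)); apply (is_RInt_scal (V:=R_NormedModule)); [apply (RInt_correct (V:=R_CompleteNormedModule)); auto | exact Hinv]. }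
  assert (Hend : k * ((- / h b) - (- / h a)) <= / d).
  { assert (Ha := Hne a (conj (Rle_refl a) Hab)). assert (Hb := Hne b (conj Hab (Rle_refl b))).
    destruct Hsg as [Hs|Hs];
    assert (Ha' := Hs a (conj (Rle_refl a) Hab)); assert (Hb' := Hs b (conj Hab (Rle_refl b))).
    - assert (0 < / h b) by (apply Rinv_0_lt_compat; lra).
      assert (0 < / h a) by (apply Rinv_0_lt_compat; lra).
      assert (/ h a <= / d) by (apply Rinv_le_contravar; lra).
      assert (/ h b <= / d) by (apply Rinv_le_contravar; lra).
      destruct Hk1; subst k; lra.
    - assert (/ (- h a) <= / d) by (apply Rinv_le_contravar; lra).
      assert (/ (- h b) <= / d) by (apply Rinv_le_contravar; lra).
      assert (0 < / (- h a)) by (apply Rinv_0_lt_compat; lra).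
      assert (0 < / (- h b)) by (apply Rinv_0_lt_compat; lra).
      rewrite Rinv_opp in *. destruct Hk1; subst k; lra. }
  fold M. rewrite HRM.
  assert (HE : Rabs (RInt E a b) <= RInt B a b) by (apply RInt_abs_le; auto; apply exRI; auto).
  rewrite HRB in HE.
  assert (HFa := HFb a (conj (Rle_refl a) Hab)). assert (HFb' := HFb b (conj Hab (Rle_refl b))).
  assert (0 <= G) by (specialize (HG a (conj (Rle_refl a) Hab)); generalize (Rabs_pos (g a)); lra).
  assert (HGk : G * (k * (- / h b - - / h a)) <= G * / d) by (apply Rmult_le_compat_l; lra).
  assert (HVd : RInt (fun x => Rabs (g' x)) a b / d <= V / d).
  { unfold Rdiv; apply Rmult_le_compat_r; [left; apply Rinv_0_lt_compat; lra | auto]. }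
  assert (HFF : Rabs (F b - F a) <= G / d + G / d).
  { eapply Rle_trans; [apply Rabs_triang|]; rewrite Rabs_Ropp; lra. }
  eapply Rle_trans; [ apply Rabs_triang | ].
  rewrite Rabs_Ropp.
  replace ((3 * G + V) / d) with (G / d + G / d + (V / d + G * / d)) by (field; lra).
  lra.
Qed.

Lemma FD (phi r h h' g g' : R -> R) (a b th d G V : R) :
  a <= b -> 0 < d ->
  (forall x, a <= x <= b -> is_derive phi x (r x * h x)) ->
  (forall x, a <= x <= b -> is_derive h x (h' x)) ->
  (forall x, a <= x <= b -> is_derive g x (g' x)) ->
  (forall x, a <= x <= b -> continuous r x /\ continuous h' x /\ continuous g' x) ->
  ((forall x, a <= x <= b -> d <= h x) \/ (forall x, a <= x <= b -> h x <= - d)) ->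
  ((forall x, a <= x <= b -> 0 <= h' x) \/ (forall x, a <= x <= b -> h' x <= 0)) ->
  (forall x, a <= x <= b -> Rabs (g x) <= G) ->
  RInt (fun x => Rabs (g' x)) a b <= V ->
  Rabs (RInt (fun x => cos (phi x + th) * (r x * g x)) a b) <= (3*G + V)/d.
Proof.
  intros Hab Hd Hphi Hh Hg Hc Hsg Hs HG HV. destruct Hs as [Hs|Hs].
  - apply (FDk phi r h h' g g' a b th d G V 1); auto. intros x Hx; specialize (Hs x Hx); lra.
  - apply (FDk phi r h h' g g' a b th d G V (-1)); auto. intros x Hx; specialize (Hs x Hx); lra.
Qed.

Lemma incr_of_deriv (h h' : R -> R) a b :
  (forall x, a <= x <= b -> is_derive h x (h' x)) ->
  (forall x, a <= x <= b -> continuous h' x) ->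
  (forall x, a <= x <= b -> 0 <= h' x) ->
  forall x y, a <= x -> x <= y -> y <= b -> h x <= h y.
Proof.
  intros Hd Hc Hp x y Hx Hxy Hy.
  assert (H : is_RInt h' x y (h y - h x)).
  { apply (is_RInt_derive h h'); rewrite Rmin_left, Rmax_right by lra; intros z Hz.
    apply Hd; lra. apply Hc; lra. }
  apply (is_RInt_unique (V:=R_CompleteNormedModule)) in H.
  assert (0 <= RInt h' x y).
  { apply RInt_ge_0; auto. apply exRI; auto. intros z Hz; apply Hc; lra.
    intros z Hz; apply Hp; lra. }
  rewrite H in *. lra.
Qed.

Lemma split_mono (h : R -> R) a b th : a <= b ->
  (forall x, a <= x <= b -> continuous h x) ->
  (forall x y, a <= x -> x <= y -> y <= b -> h x <= h y) ->
  exists c, a <= c <= b /\ (c = a \/ forall x, a <= x <= c -> h x <= th)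
    /\ (c = b \/ forall x, c <= x <= b -> th <= h x).
Proof.
  intros Hab Hc Hm.
  destruct (Rle_lt_dec th (h a)) as [H1|H1].
  { exists a. split; [lra|]. split; [left; auto|]. right. intros x Hx.
    apply Rle_trans with (h a); auto. apply Hm; lra. }
  destruct (Rle_lt_dec (h b) th) as [H2|H2].
  { exists b. split; [lra|]. split; [|left; auto]. right. intros x Hx.
    apply Rle_trans with (h b); auto. apply Hm; lra. }
  assert (Hab' : a < b).
  { destruct Hab as [|E]; auto. subst. lra. }
  destruct (Ranalysis5.IVT_interv (fun x => h x - th) a b) as [z [Hz Hz']]; auto; try lra.
  { intros x Hx. apply continuity_pt_filterlim. apply (c_minus h (fun _ => th)). apply Hc; lra. apply c_const. }
  exists z. split; auto. split; right; intros x Hx.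
  - apply Rle_trans with (h z). apply Hm; lra. lra.
  - apply Rle_trans with (h z). lra. apply Hm; lra.
Qed.

Lemma RInt_sub_le (f : R -> R) a c d b : a <= c -> c <= d -> d <= b ->
  (forall x, a <= x <= b -> continuous f x) -> (forall x, a <= x <= b -> 0 <= f x) ->
  RInt f c d <= RInt f a b.
Proof.
  intros H1 H2 H3 Hc Hp.
  assert (e1 : ex_RInt f a c) by (apply exRI; auto; intros; apply Hc; lra).
  assert (e2 : ex_RInt f c d) by (apply exRI; auto; intros; apply Hc; lra).
  assert (e3 : ex_RInt f d b) by (apply exRI; auto; intros; apply Hc; lra).
  assert (E1 := RInt_Chasles f a c d e1 e2).
  assert (E2 := RInt_Chasles f a d b (ex_RInt_Chasles f a c d e1 e2) e3).
  unfold plus in E1, E2; simpl in E1, E2.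
  assert (0 <= RInt f a c) by (apply RInt_ge_0; auto; intros; apply Hp; lra).
  assert (0 <= RInt f d b) by (apply RInt_ge_0; auto; intros; apply Hp; lra).
  lra.
Qed.

Lemma RInt_chasles3 (f : R -> R) a c b : a <= c -> c <= b ->
  (forall x, a <= x <= b -> continuous f x) -> RInt f a b = RInt f a c + RInt f c b.
Proof.
  intros H1 H2 Hc.
  assert (e1 : ex_RInt f a c) by (apply exRI; auto; intros; apply Hc; lra).
  assert (e2 : ex_RInt f c b) by (apply exRI; auto; intros; apply Hc; lra).
  assert (E1 := RInt_Chasles f a c b e1 e2). unfold plus in E1; simpl in E1. lra.
Qed.

Lemma SD (phi r h h' g g' : R -> R) (a b th mu G V : R) :
  a <= b -> 0 < mu ->
  (forall x, a <= x <= b -> is_derive phi x (r x * h x)) ->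
  (forall x, a <= x <= b -> is_derive h x (h' x)) ->
  (forall x, a <= x <= b -> is_derive g x (g' x)) ->
  (forall x, a <= x <= b -> continuous r x /\ continuous h' x /\ continuous g' x) ->
  (forall x, a <= x <= b -> 0 <= r x) ->
  (forall x, a <= x <= b -> mu * r x <= h' x) ->
  (forall x, a <= x <= b -> Rabs (g x) <= G) ->
  RInt (fun x => Rabs (g' x)) a b <= V ->
  Rabs (RInt (fun x => cos (phi x + th) * (r x * g x)) a b) <= (8*G + 2*V)/ sqrt mu.
Proof.
  intros Hab Hmu Hphi Hh Hg Hc Hr Hh' HG HV.
  set (d := sqrt mu).
  assert (Hd : 0 < d) by (apply sqrt_lt_R0; auto).
  assert (Hdd : d * d = mu) by (apply sqrt_sqrt; lra).
  assert (Hcphi : forall x, a <= x <= b -> continuous phi x) by (intros; eapply is_derive_cont; eauto).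
  assert (Hch : forall x, a <= x <= b -> continuous h x) by (intros; eapply is_derive_cont; eauto).
  assert (Hcg : forall x, a <= x <= b -> continuous g x) by (intros; eapply is_derive_cont; eauto).
  assert (Hh'p : forall x, a <= x <= b -> 0 <= h' x).
  { intros x Hx. specialize (Hr x Hx). specialize (Hh' x Hx). nra. }
  assert (Hm : forall x y, a <= x -> x <= y -> y <= b -> h x <= h y).
  { apply (incr_of_deriv h h'); auto. intros x Hx; apply (Hc x Hx). }
  set (f := fun x => cos (phi x + th) * (r x * g x)).
  assert (Hcf : forall x, a <= x <= b -> continuous f x).
  { intros x Hx. destruct (Hc x Hx) as (?&?&?). unfold f. cont. }
  assert (HG0 : 0 <= G) by (specialize (HG a (conj (Rle_refl a) Hab)); generalize (Rabs_pos (g a)); lra).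
  assert (Hcg' : forall x, a <= x <= b -> continuous (fun x => Rabs (g' x)) x).
  { intros x Hx. destruct (Hc x Hx) as (?&?&?). cont. }
  assert (HVsub : forall c e, a <= c -> c <= e -> e <= b -> RInt (fun x => Rabs (g' x)) c e <= V).
  { intros c e H1 H2 H3. eapply Rle_trans; [|apply HV]. apply RInt_sub_le; auto.
    intros; apply Rabs_pos. }
  assert (HV0 : 0 <= V).
  { eapply Rle_trans; [|apply (HVsub a a)]; try lra. rewrite RInt_point. right; reflexivity. }
  destruct (split_mono h a b (- d) Hab Hch Hm) as [c1 [Hc1 [Hc1a Hc1b]]].
  destruct (split_mono h c1 b d) as [c2 [Hc2 [Hc2a Hc2b]]]; try lra.
  { intros; apply Hch; lra. } { intros; apply Hm; lra. }
  fold f.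
  rewrite (RInt_chasles3 f a c1 b); [| lra | lra | exact Hcf].
  rewrite (RInt_chasles3 f c1 c2 b); [| lra | lra | intros x Hx; apply Hcf; lra].
  assert (P1 : Rabs (RInt f a c1) <= (3 * G + V) / d).
  { destruct Hc1a as [E|Hc1a].
    - subst c1. rewrite RInt_point. unfold zero; simpl. rewrite Rabs_R0.
      apply Rmult_le_pos; [lra| left; apply Rinv_0_lt_compat; lra].
    - apply (FD phi r h h' g g' a c1 th d G V); try lra; try (intros; apply Hphi || apply Hh || apply Hg || apply Hc || apply HG; lra).
      right; intros; apply Hc1a; lra. left; intros; apply Hh'p; lra.
      apply HVsub; lra. }
  assert (P3 : Rabs (RInt f c2 b) <= (3 * G + V) / d).
  { destruct Hc2b as [E|Hc2b].
    - subst c2. rewrite RInt_point. unfold zero; simpl. rewrite Rabs_R0.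
      apply Rmult_le_pos; [lra| left; apply Rinv_0_lt_compat; lra].
    - apply (FD phi r h h' g g' c2 b th d G V); try lra; try (intros; apply Hphi || apply Hh || apply Hg || apply Hc || apply HG; lra).
      left; intros; apply Hc2b; lra. left; intros; apply Hh'p; lra.
      apply HVsub; lra. }
  assert (P2 : Rabs (RInt f c1 c2) <= 2 * G / d).
  { destruct (Req_dec c1 c2) as [E|Hne].
    - subst c2. rewrite RInt_point. unfold zero; simpl. rewrite Rabs_R0.
      apply Rmult_le_pos; [lra| left; apply Rinv_0_lt_compat; lra].
    - assert (Hlo : forall x, c1 <= x <= c2 -> - d <= h x).
      { destruct Hc1b as [E|Hc1b]. subst c1. lra. intros; apply Hc1b; lra. }
      assert (Hhi : forall x, c1 <= x <= c2 -> h x <= d).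
      { destruct Hc2a as [E|Hc2a]. lra. intros; apply Hc2a; lra. }
      assert (Hint : is_RInt (fun x => G / mu * h' x) c1 c2 (G / mu * (h c2 - h c1))).
      { apply (is_RInt_scal (V:=R_NormedModule) h' c1 c2 (G / mu) (h c2 - h c1)).
        apply (is_RInt_derive h h'); rewrite Rmin_left, Rmax_right by lra; intros z Hz.
        apply Hh; lra. apply Hc; lra. }
      eapply Rle_trans.
      + apply (RInt_abs_le f (fun x => G / mu * h' x)); try lra.
        apply exRI; try lra; intros; apply Hcf; lra.
        eexists; eauto.
        intros x Hx. unfold f. rewrite !Rabs_mult.
        assert (Rabs (cos (phi x + th)) <= 1) by apply Rabs_cos_le_1.
        rewrite (Rabs_pos_eq (r x)) by (apply Hr; lra).
        assert (Hgx := HG x ltac:(lra)). assert (Hrx := Hr x ltac:(lra)). assert (Hhx := Hh' x ltac:(lra)).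
        apply Rle_trans with (1 * (r x * G)).
        apply Rmult_le_compat; try lra; try apply Rabs_pos. apply Rmult_le_pos; auto; apply Rabs_pos.
        apply Rmult_le_compat_l; auto.
        apply Rle_trans with (G * (h' x / mu)).
        * rewrite Rmult_1_l, Rmult_comm. apply Rmult_le_compat_l; auto.
          apply Rmult_le_reg_l with mu; auto. field_simplify; lra.
        * right; field; lra.
      + rewrite (is_RInt_unique (V:=R_CompleteNormedModule) _ _ _ _ Hint).
        assert (h c2 - h c1 <= 2 * d) by (generalize (Hlo c1 ltac:(lra)) (Hhi c2 ltac:(lra)); lra).
        rewrite <- Hdd. apply Rle_trans with (G / (d * d) * (2 * d)).
        apply Rmult_le_compat_l; auto. apply Rmult_le_pos; auto. left; apply Rinv_0_lt_compat; nra.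
        right; field; lra. }
  fold d.
  eapply Rle_trans. apply Rabs_triang.
  eapply Rle_trans. apply Rplus_le_compat_l. apply Rabs_triang.
  replace ((8 * G + 2 * V) / d) with ((3 * G + V) / d + 2 * G / d + (3 * G + V) / d) by (field; lra).
  lra.
Qed.

Lemma sign_k (f : R -> R) a b : ((forall x, a <= x <= b -> 0 <= f x) \/ (forall x, a <= x <= b -> f x <= 0)) ->
  exists k, (k = 1 \/ k = -1) /\ forall x, a <= x <= b -> 0 <= k * f x /\ Rabs (f x) = k * f x.
Proof.
  intros [H|H]; [exists 1 | exists (-1)]; split; auto; intros x Hx; specialize (H x Hx); split.
  lra. rewrite Rabs_pos_eq; lra. lra. rewrite Rabs_left1; lra.
Qed.

Lemma Vprod (w q w' q' : R -> R) a b W Q :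
  a <= b ->
  (forall x, a <= x <= b -> is_derive w x (w' x)) ->
  (forall x, a <= x <= b -> is_derive q x (q' x)) ->
  (forall x, a <= x <= b -> continuous w' x /\ continuous q' x) ->
  ((forall x, a <= x <= b -> 0 <= w' x) \/ (forall x, a <= x <= b -> w' x <= 0)) ->
  ((forall x, a <= x <= b -> 0 <= q' x) \/ (forall x, a <= x <= b -> q' x <= 0)) ->
  (forall x, a <= x <= b -> 0 <= w x <= W) ->
  (forall x, a <= x <= b -> 0 <= q x <= Q) ->
  RInt (fun x => Rabs (w' x * q x + w x * q' x)) a b <= 2 * W * Q.
Proof.
  intros Hab Hw Hq Hc Hsw Hsq HW HQ.
  destruct (sign_k w' a b Hsw) as [k1 [Hk1 Hk1']].
  destruct (sign_k q' a b Hsq) as [k2 [Hk2 Hk2']].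
  assert (Hcw : forall x, a <= x <= b -> continuous w x) by (intros; eapply is_derive_cont; eauto).
  assert (Hcq : forall x, a <= x <= b -> continuous q x) by (intros; eapply is_derive_cont; eauto).
  assert (Hint : is_RInt (fun x => plus (scal (Q * k1) (w' x)) (scal (W * k2) (q' x))) a b
                  (plus (scal (Q * k1) (w b - w a)) (scal (W * k2) (q b - q a)))).
  { apply (is_RInt_plus (V:=R_NormedModule)); apply (is_RInt_scal (V:=R_NormedModule));
    [apply (is_RInt_derive w w') | apply (is_RInt_derive q q')]; rewrite Rmin_left, Rmax_right by lra;
    intros x Hx; try (apply Hw; lra); try (apply Hq; lra); apply (Hc x Hx). }
  apply Rle_trans with (RInt (fun x => plus (scal (Q * k1) (w' x)) (scal (W * k2) (q' x))) a b).
  - apply RInt_le; auto.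
    + apply exRI; auto. intros x Hx. destruct (Hc x Hx). cont.
    + eexists; eauto.
    + intros x Hx. unfold plus, scal; simpl; unfold mult; simpl.
      assert (Hx' : a <= x <= b) by lra.
      destruct (Hk1' x Hx') as [A1 B1]. destruct (Hk2' x Hx') as [A2 B2].
      destruct (HW x Hx'). destruct (HQ x Hx').
      eapply Rle_trans. apply Rabs_triang. rewrite !Rabs_mult, B1, B2.
      rewrite (Rabs_pos_eq (q x)), (Rabs_pos_eq (w x)) by lra.
      apply Rplus_le_compat.
      * replace (Q * k1 * w' x) with ((k1 * w' x) * Q) by ring. apply Rmult_le_compat_l; lra.
      * replace (W * k2 * q' x) with (W * (k2 * q' x)) by ring. apply Rmult_le_compat_r; lra.
  - rewrite (is_RInt_unique (V:=R_CompleteNormedModule) _ _ _ _ Hint).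
    unfold plus, scal; simpl; unfold mult; simpl.
    destruct (HW a ltac:(lra)), (HW b ltac:(lra)), (HQ a ltac:(lra)), (HQ b ltac:(lra)).
    assert (k1 * (w b - w a) <= W) by (destruct Hk1; subst; lra).
    assert (k2 * (q b - q a) <= Q) by (destruct Hk2; subst; lra).
    assert (0 <= Q) by lra. assert (0 <= W) by lra.
    replace (Q * k1 * (w b - w a)) with (Q * (k1 * (w b - w a))) by ring.
    replace (W * k2 * (q b - q a)) with (W * (k2 * (q b - q a))) by ring.
    assert (Q * (k1 * (w b - w a)) <= Q * W) by (apply Rmult_le_compat_l; lra).
    assert (W * (k2 * (q b - q a)) <= W * Q) by (apply Rmult_le_compat_l; lra).
    lra.
Qed.

Lemma improper_R (f : R -> R) (K M : R) :
  (forall x, 0 < x -> continuous f x) ->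
  (forall x, 0 < x <= 1 -> Rabs (f x) <= M) ->
  (forall eps, 0 < eps -> exists B, 0 < B /\ forall u v, B <= u -> u <= v -> Rabs (RInt f u v) <= eps) ->
  (forall u v, 0 < u -> u <= v -> Rabs (RInt f u v) <= K) ->
  exists I, filterlim (fun ab : R * R => RInt f (fst ab) (snd ab))
     (filter_prod (at_right 0) (Rbar_locally p_infty)) (locally I) /\ Rabs I <= K.
Proof.
  intros Hc HM Htail HK.
  assert (Hex : forall u v, 0 < u -> 0 < v -> ex_RInt f u v).
  { intros u v Hu Hv. destruct (Rle_or_lt u v).
    apply exRI; auto; intros; apply Hc; lra.
    apply ex_RInt_swap. apply exRI; try lra; intros; apply Hc; lra. }
  assert (HPF : ProperFilter (filter_prod (at_right 0) (Rbar_locally p_infty))).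
  { apply filter_prod_proper; try apply at_right_proper_filter; try apply Rbar_locally_filter. }
  assert (HM0 : 0 <= M) by (specialize (HM 1 ltac:(lra)); generalize (Rabs_pos (f 1)); lra).
  assert (Hlim : exists I, filterlim (fun ab : R * R => RInt f (fst ab) (snd ab))
     (filter_prod (at_right 0) (Rbar_locally p_infty)) (locally I)).
  { apply (filterlim_locally_cauchy (U:=R_CompleteSpace)); auto.
    intros eps.
    assert (He3 : 0 < eps / 3) by (destruct eps; simpl; lra).
    destruct (Htail (eps / 3) He3) as [B [HB HB']].
    set (dl := Rmin 1 (eps / (3 * (M + 1)))).
    assert (Hdl : 0 < dl).
    { unfold dl. apply Rmin_pos. lra. apply Rdiv_lt_0_compat. destruct eps; simpl; lra. lra. }
    exists (fun ab : R * R => 0 < fst ab < dl /\ Rmax B 1 < snd ab).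
    split.
    - apply (Filter_prod _ _ _ (fun a => 0 < a < dl) (fun b => Rmax B 1 < b)).
      + exists (mkposreal dl Hdl). intros y Hy Hy0. simpl in *.
        unfold ball in Hy; simpl in Hy. unfold AbsRing_ball, abs, minus, plus, opp in Hy; simpl in Hy.
        rewrite Ropp_0, Rplus_0_r in Hy. apply Rabs_lt_between in Hy. lra.
      + exists (Rmax B 1). auto.
      + intros x y Hx Hy. simpl. auto.
    - intros [a b] [a' b'] [Ha Hb] [Ha' Hb']. simpl in *.
      assert (HB1 : B <= Rmax B 1) by apply Rmax_l. assert (HB2 : 1 <= Rmax B 1) by apply Rmax_r.
      assert (Hdl1 : dl <= 1) by apply Rmin_l.
      assert (Hdl2 : dl <= eps / (3 * (M + 1))) by apply Rmin_r.
      apply (norm_compat1 (V:=R_NormedModule)).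
      unfold norm, minus, plus, opp; simpl. unfold abs; simpl.
      assert (E1 := RInt_Chasles f a a' b (Hex a a' ltac:(lra) ltac:(lra)) (Hex a' b ltac:(lra) ltac:(lra))).
      assert (E2 := RInt_Chasles f a' b' b (Hex a' b' ltac:(lra) ltac:(lra)) (Hex b' b ltac:(lra) ltac:(lra))).
      unfold plus in E1, E2; simpl in E1, E2.
      assert (T1 : Rabs (RInt f a a') <= eps / 3).
      { assert (N := norm_RInt_le_const_abs (V:=R_NormedModule) f a a' (RInt f a a') M).
        unfold norm in N; simpl in N; unfold abs in N; simpl in N.
        eapply Rle_trans. apply N.
        intros x Hx. apply HM. split. apply Rlt_le_trans with (Rmin a a'). apply Rmin_glb_lt; lra. lra.
        apply Rle_trans with (Rmax a a'). lra. apply Rmax_lub; lra.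
        apply (RInt_correct (V:=R_CompleteNormedModule)). apply Hex; lra.
        assert (Rabs (a' - a) <= dl) by (apply Rabs_le; lra).
        apply Rle_trans with (dl * M). apply Rmult_le_compat_r; lra.
        apply Rle_trans with (eps / (3 * (M + 1)) * M). apply Rmult_le_compat_r; lra.
        destruct eps as [e He]; simpl in *.
        apply Rle_trans with (e / (3 * (M + 1)) * (M + 1)). apply Rmult_le_compat_l. apply Rlt_le, Rdiv_lt_0_compat; lra. lra.
        right; field; lra. }
      assert (T2 : Rabs (RInt f b' b) <= eps / 3).
      { destruct (Rle_or_lt b' b).
        apply HB'; lra.
        rewrite <- (opp_RInt_swap (V:=R_CompleteNormedModule)) by (apply Hex; lra).
        unfold opp; simpl. rewrite Rabs_Ropp. apply HB'; lra. }
      replace (RInt f a' b' + - RInt f a b) with (- (RInt f a a' + RInt f b' b)) by lra.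
      rewrite Rabs_Ropp. eapply Rle_lt_trans. apply Rabs_triang.
      destruct eps; simpl in *; lra. }
  destruct Hlim as [I HI]. exists I. split; auto.
  destruct (Rle_or_lt (Rabs I) K) as [|Hlt]; auto. exfalso.
  assert (He : 0 < Rabs I - K) by lra.
  apply filterlim_locally with (eps := mkposreal _ He) in HI.
  assert (Hev : filter_prod (at_right 0) (Rbar_locally p_infty) (fun ab : R * R => 0 < fst ab < 1 /\ 1 < snd ab)).
  { apply (Filter_prod _ _ _ (fun a => 0 < a < 1) (fun b => 1 < b)).
    + exists (mkposreal 1 Rlt_0_1). intros y Hy Hy0. simpl in *.
      unfold ball in Hy; simpl in Hy. unfold AbsRing_ball, abs, minus, plus, opp in Hy; simpl in Hy.
      rewrite Ropp_0, Rplus_0_r in Hy. apply Rabs_lt_between in Hy. lra.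
    + exists 1. auto.
    + intros x y Hx Hy. simpl. auto. }
  destruct (Hierarchy.filter_ex _ (filter_and _ _ HI Hev)) as [[a b] [Hb [Ha1 Ha2]]].
  simpl in *.
  unfold ball in Hb; simpl in Hb. unfold AbsRing_ball, abs, minus, plus, opp in Hb; simpl in Hb.
  assert (HKab := HK a b ltac:(lra) ltac:(lra)).
  assert (Rabs I <= Rabs (RInt f a b) + Rabs (RInt f a b + - I)).
  { replace I with (RInt f a b - (RInt f a b + - I)) at 1 by ring.
    eapply Rle_trans. apply Rabs_triang. rewrite Rabs_Ropp. lra. }
  lra.
Qed.

Lemma improper_C (f1 f2 : R -> R) I1 I2 :
  (forall x, 0 < x -> continuous f1 x /\ continuous f2 x) ->
  filterlim (fun ab : R * R => RInt f1 (fst ab) (snd ab)) (filter_prod (at_right 0) (Rbar_locally p_infty)) (locally I1) ->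
  filterlim (fun ab : R * R => RInt f2 (fst ab) (snd ab)) (filter_prod (at_right 0) (Rbar_locally p_infty)) (locally I2) ->
  improper_int_0_oo (fun x => (f1 x, f2 x)) (I1, I2).
Proof.
  intros Hc H1 H2. unfold improper_int_0_oo, is_RInt_gen.
  assert (HPF : ProperFilter (filter_prod (at_right 0) (Rbar_locally p_infty))).
  { apply filter_prod_proper; try apply at_right_proper_filter; try apply Rbar_locally_filter. }
  apply (filterlimi_lim_ext_loc (fun ab : R * R => (RInt f1 (fst ab) (snd ab), RInt f2 (fst ab) (snd ab)))).
  - apply (Filter_prod _ _ _ (fun a => 0 < a < 1) (fun b => 1 < b)).
    + exists (mkposreal 1 Rlt_0_1). intros y Hy Hy0. simpl in *.
      unfold ball in Hy; simpl in Hy. unfold AbsRing_ball, abs, minus, plus, opp in Hy; simpl in Hy.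
      rewrite Ropp_0, Rplus_0_r in Hy. apply Rabs_lt_between in Hy. lra.
    + exists 1. auto.
    + intros a b Ha Hb. simpl.
      apply (is_RInt_fct_extend_pair (U:=R_NormedModule) (V:=R_NormedModule) (fun x => (f1 x, f2 x))); simpl;
      apply (RInt_correct (V:=R_CompleteNormedModule)); apply exRI; try lra; intros x Hx; apply Hc; lra.
  - intros P [eps HP].
    assert (H := filterlim_pair _ _ H1 H2 (fun y => P y)).
    apply H.
    apply (Filter_prod _ _ _ (ball I1 eps) (ball I2 eps)); try apply locally_ball.
    intros x y Hx Hy. apply HP. split; auto.
Qed.

Lemma sum1_S (a : nat -> R) m : (sum_n_m a 1 (S m) : R) = sum_n_m a 1 m + a (S m).
Proof. rewrite sum_n_Sm by lia. reflexivity. Qed.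
Lemma sum1_0 (a : nat -> R) : (sum_n_m a 1 0 : R) = 0.
Proof. rewrite sum_n_m_zero by lia. reflexivity. Qed.

Lemma sum_derive (f df : nat -> R -> R) m x :
  (forall j, (1 <= j <= m)%nat -> is_derive (f j) x (df j x)) ->
  is_derive (fun y => sum_n_m (fun j => f j y) 1 m) x (sum_n_m (fun j => df j x) 1 m).
Proof.
  induction m; intros H.
  - apply (is_derive_ext (fun _ => 0)). intros; rewrite sum1_0; auto. rewrite sum1_0. (auto_derive; auto).
  - apply (is_derive_ext (fun y => sum_n_m (fun j => f j y) 1 m + f (S m) y)).
    intros; rewrite sum1_S; auto. rewrite sum1_S.
    apply (is_derive_plus (fun y => sum_n_m (fun j => f j y) 1 m) (f (S m))).
    apply IHm. intros; apply H; lia. apply H; lia.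
Qed.

Lemma sum_cont (f : nat -> R -> R) m x :
  (forall j, (1 <= j <= m)%nat -> continuous (f j) x) ->
  continuous (fun y => sum_n_m (fun j => f j y) 1 m) x.
Proof.
  induction m; intros H.
  - apply (continuous_ext (fun _ => 0)). intros; rewrite sum1_0; auto. apply c_const.
  - apply (continuous_ext (fun y => sum_n_m (fun j => f j y) 1 m + f (S m) y)).
    intros; rewrite sum1_S; auto.
    apply (c_plus (fun y => sum_n_m (fun j => f j y) 1 m) (f (S m))).
    apply IHm. intros; apply H; lia. apply H; lia.
Qed.

Lemma sum_le (a c : nat -> R) m : (forall j, (1 <= j <= m)%nat -> a j <= c j) ->
  sum_n_m a 1 m <= sum_n_m c 1 m.
Proof.
  induction m; intros H. rewrite !sum1_0; lra.
  rewrite !sum1_S. assert (a (S m) <= c (S m)) by (apply H; lia).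
  assert (sum_n_m a 1 m <= sum_n_m c 1 m) by (apply IHm; intros; apply H; lia). lra.
Qed.

Lemma sum_ext (a c : nat -> R) m : (forall j, (1 <= j <= m)%nat -> a j = c j) ->
  (sum_n_m a 1 m : R) = sum_n_m c 1 m.
Proof. intros H. apply sum_n_m_ext_loc. auto. Qed.

Lemma sum_scal (a : nat -> R) (cc : R) m : (sum_n_m (fun j => cc * a j) 1 m : R) = cc * sum_n_m a 1 m.
Proof.
  induction m.
  - rewrite !sum1_0. ring.
  - rewrite !sum1_S, IHm. ring.
Qed.

Lemma sum_nonneg (a : nat -> R) m : (forall j, (1 <= j <= m)%nat -> 0 <= a j) -> 0 <= sum_n_m a 1 m.
Proof.
  intros H. apply Rle_trans with (sum_n_m (fun _ => 0) 1 m).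
  right. induction m. rewrite sum1_0; auto. rewrite sum1_S, <- IHm; try ring. intros; apply H; lia.
  apply sum_le; auto.
Qed.

Lemma single_le_sum (a : nat -> R) m k : (forall j, (1 <= j <= m)%nat -> 0 <= a j) -> (1 <= k <= m)%nat ->
  a k <= sum_n_m a 1 m.
Proof.
  induction m; intros H Hk. lia.
  rewrite sum1_S. destruct (Nat.eq_dec k (S m)).
  - subst. assert (0 <= sum_n_m a 1 m) by (apply sum_nonneg; intros; apply H; lia). lra.
  - assert (a k <= sum_n_m a 1 m) by (apply IHm; [intros; apply H; lia | lia]).
    assert (0 <= a (S m)) by (apply H; lia). lra.
Qed.

Lemma sum_bound (a : nat -> R) m c : (forall j, (1 <= j <= m)%nat -> a j <= c) ->
  sum_n_m a 1 m <= INR m * c.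
Proof.
  induction m; intros H. rewrite sum1_0. simpl; lra.
  rewrite sum1_S, S_INR. assert (a (S m) <= c) by (apply H; lia).
  assert (sum_n_m a 1 m <= INR m * c) by (apply IHm; intros; apply H; lia). lra.
Qed.

Lemma max_1n_ge (b : nat -> R) m j : (1 <= j <= m)%nat -> b j <= max_1n b m.
Proof.
  induction m; intros Hj. lia. simpl. destruct (Nat.eq_dec j (S m)).
  subst. apply Rmax_r. eapply Rle_trans. apply IHm; lia. apply Rmax_l.
Qed.

Lemma sigma_mono (sigma : nat -> R) m :
  (forall j, (1 <= j < m)%nat -> sigma (S j) <= sigma j) ->
  forall i j, (1 <= j)%nat -> (j + i <= m)%nat -> sigma (j + i)%nat <= sigma j.
Proof.
  intros H i. induction i; intros j Hj Hji. rewrite Nat.add_0_r; lra.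
  replace (j + S i)%nat with (S (j + i)) by lia.
  eapply Rle_trans. apply H. lia. apply IHi; lia.
Qed.

Definition S1 (m : nat) (b sg : nat -> R) (x : R) := sum_n_m (fun j => b j / sqrt (x^2 + sg j)) 1 m.
Definition S3 (m : nat) (b sg : nat -> R) (x : R) :=
  sum_n_m (fun j => b j / ((x^2 + sg j) * sqrt (x^2 + sg j))) 1 m.
Definition hh s m b sg x := 1 + s * S1 m b sg x.
Definition hh' s m b sg x := - s * (x * S3 m b sg x).

Definition Hsb (m : nat) (b sg : nat -> R) :=
  (forall j, (1 <= j <= m)%nat -> 0 <= sg j) /\ (forall j, (1 <= j <= m)%nat -> 0 < b j).

Lemma pos_sq (x t : R) : 0 < x -> 0 <= t -> 0 < x^2 + t.
Proof. intros. nra. Qed.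

Lemma S1_nonneg m b sg x : Hsb m b sg -> 0 < x -> 0 <= S1 m b sg x.
Proof.
  intros [Hs Hb] Hx. apply sum_nonneg. intros j Hj.
  apply Rdiv_le_0_compat. left; auto. apply sqrt_lt_R0, pos_sq; auto.
Qed.

Lemma S3_nonneg m b sg x : Hsb m b sg -> 0 < x -> 0 <= S3 m b sg x.
Proof.
  intros [Hs Hb] Hx. apply sum_nonneg. intros j Hj.
  assert (0 < x^2 + sg j) by (apply pos_sq; auto).
  apply Rdiv_le_0_compat. left; auto. apply Rmult_lt_0_compat; auto. apply sqrt_lt_R0; auto.
Qed.

Lemma phase_derive s m b sg x : Hsb m b sg -> 0 < x ->
  is_derive (phase s m b sg) x (x * hh s m b sg x).
Proof.
  intros [Hs Hb] Hx. unfold phase, hh, S1.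
  apply (is_derive_ext (fun y => y ^ 2 / 2 + s * sum_n_m (fun j => (fun j y => b j * sqrt (y ^ 2 + sg j)) j y) 1 m)).
  reflexivity.
  replace (x * (1 + s * sum_n_m (fun j => b j / sqrt (x ^ 2 + sg j)) 1 m))
    with (x + s * sum_n_m (fun j => (fun j y => b j * y / sqrt (y ^ 2 + sg j)) j x) 1 m).
  2:{ rewrite Rmult_plus_distr_l, Rmult_1_r. f_equal.
      replace (sum_n_m (fun j => (fun j y => b j * y / sqrt (y ^ 2 + sg j)) j x) 1 m)
        with (x * sum_n_m (fun j => b j / sqrt (x ^ 2 + sg j)) 1 m). ring.
      rewrite <- sum_scal. apply sum_ext. intros; simpl; unfold Rdiv; ring. }
  apply (is_derive_plus (fun y => y^2/2)).
  - auto_derive; auto. field.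
  - apply (is_derive_scal (fun y => sum_n_m (fun j => (fun j y => b j * sqrt (y ^ 2 + sg j)) j y) 1 m) x s).
    apply (sum_derive (fun j y => b j * sqrt (y^2+sg j)) (fun j y => b j * y / sqrt (y^2+sg j)) m x).
    intros j Hj. assert (0 < x^2 + sg j) by (apply pos_sq; auto).
    auto_derive. auto. replace (x * (x * 1)) with (x ^ 2) by ring. field. apply Rgt_not_eq, sqrt_lt_R0; auto.
Qed.

Lemma hh_derive s m b sg x : Hsb m b sg -> 0 < x -> is_derive (hh s m b sg) x (hh' s m b sg x).
Proof.
  intros [Hs Hb] Hx. unfold hh, hh', S1, S3.
  apply (is_derive_ext (fun y => 1 + s * sum_n_m (fun j => (fun j y => b j / sqrt (y ^ 2 + sg j)) j y) 1 m)).
  reflexivity.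
  replace (- s * (x * sum_n_m (fun j => b j / ((x ^ 2 + sg j) * sqrt (x ^ 2 + sg j))) 1 m))
    with (0 + s * sum_n_m (fun j => (fun j y => - (b j * y) / ((y ^ 2 + sg j) * sqrt (y ^ 2 + sg j))) j x) 1 m).
  2:{ replace (sum_n_m (fun j => (fun j y => - (b j * y) / ((y ^ 2 + sg j) * sqrt (y ^ 2 + sg j))) j x) 1 m)
        with (- x * sum_n_m (fun j => b j / ((x ^ 2 + sg j) * sqrt (x ^ 2 + sg j))) 1 m). ring.
      rewrite <- sum_scal. apply sum_ext. intros; simpl; unfold Rdiv; ring. }
  apply (is_derive_plus (fun _ => 1)). (auto_derive; auto).
  apply (is_derive_scal (fun y => sum_n_m (fun j => (fun j y => b j / sqrt (y ^ 2 + sg j)) j y) 1 m) x s).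
  apply (sum_derive (fun j y => b j / sqrt (y ^ 2 + sg j)) (fun j y => - (b j * y) / ((y ^ 2 + sg j) * sqrt (y ^ 2 + sg j))) m x).
  intros j Hj. assert (0 < x^2 + sg j) by (apply pos_sq; auto).
  assert (0 < sqrt (x^2 + sg j)) by (apply sqrt_lt_R0; auto).
  auto_derive; replace (x * (x * 1)) with (x ^ 2) by ring.
  repeat split; auto; lra.
  assert (Hq : sqrt (x^2 + sg j) * sqrt (x^2 + sg j) = x^2 + sg j) by (apply sqrt_sqrt; lra).
  set (q := sqrt (x^2 + sg j)) in *. rewrite <- Hq. field. lra.
Qed.

Lemma hh_cont s m b sg x : Hsb m b sg -> 0 < x -> continuous (hh s m b sg) x.
Proof. intros. eapply is_derive_cont. apply hh_derive; auto. Qed.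

Lemma hh'_cont s m b sg x : Hsb m b sg -> 0 < x -> continuous (hh' s m b sg) x.
Proof.
  intros [Hs Hb] Hx. unfold hh', S3.
  apply (c_mult (fun _ => - s) (fun y => y * sum_n_m (fun j => (fun j y => b j / ((y ^ 2 + sg j) * sqrt (y ^ 2 + sg j))) j y) 1 m)).
  apply c_const. apply c_mult. apply c_id.
  apply (sum_cont (fun j y => b j / ((y ^ 2 + sg j) * sqrt (y ^ 2 + sg j)))). intros j Hj.
  assert (0 < x^2 + sg j) by (apply pos_sq; auto).
  assert (0 < sqrt (x^2 + sg j)) by (apply sqrt_lt_R0; auto).
  cont. apply Rgt_not_eq. apply Rmult_lt_0_compat; auto.
Qed.

Definition Hom (a0 : R) (om : R -> R) :=
  (forall l, 0 < l -> ex_derive om l /\ ex_derive (Derive om) l) /\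
  ((forall x y, 0 < x -> x <= y -> om x <= om y) \/ (forall x y, 0 < x -> x <= y -> om y <= om x)) /\
  (forall l, 0 < l -> 0 <= om l <= a0).

Definition psi (tau : R) (om : R -> R) (x : R) := x / sqrt (x^2 + tau) * om x.
Definition Fth s m b sg tau om th x := psi tau om x * cos (phase s m b sg x + th).
Definition qf (tau x : R) := / sqrt (x^2 + tau).
Definition qf' (tau x : R) := - x / ((x^2 + tau) * sqrt (x^2 + tau)).
Definition wf (tau x : R) := x / sqrt (x^2 + tau).
Definition wf' (tau x : R) := tau / ((x^2 + tau) * sqrt (x^2 + tau)).

Lemma om_der a0 om x : Hom a0 om -> 0 < x -> is_derive om x (Derive om x).
Proof. intros [H _] Hx. apply Derive_correct. apply H; auto. Qed.
Lemma om_cont a0 om x : Hom a0 om -> 0 < x -> continuous om x.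
Proof. intros H Hx. eapply is_derive_cont. apply (om_der a0); eauto. Qed.
Lemma om'_cont a0 om x : Hom a0 om -> 0 < x -> continuous (Derive om) x.
Proof. intros [H _] Hx. apply (ex_derive_continuous (K:=R_AbsRing) (V:=R_NormedModule)). apply H; auto. Qed.
Lemma om'_sign a0 om u v : Hom a0 om -> 0 < u ->
  (forall x, u <= x <= v -> 0 <= Derive om x) \/ (forall x, u <= x <= v -> Derive om x <= 0).
Proof.
  intros Hm Hu. destruct Hm as [H1 [[H2|H2] H3]].
  - left. intros x Hx. apply (deriv_nonneg_of_incr om x). lra. auto. apply (om_der a0); [split; auto|lra].
  - right. intros x Hx. apply (deriv_nonpos_of_decr om x). lra. auto. apply (om_der a0); [split; auto|lra].
Qed.

Lemma qf_der tau x : 0 <= tau -> 0 < x -> is_derive (qf tau) x (qf' tau x).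
Proof.
  intros Ht Hx. unfold qf, qf'. assert (0 < x^2 + tau) by (apply pos_sq; auto).
  assert (0 < sqrt (x^2 + tau)) by (apply sqrt_lt_R0; auto).
  auto_derive; replace (x * (x * 1)) with (x ^ 2) by ring.
  repeat split; auto; lra.
  assert (Hq : sqrt (x^2 + tau) * sqrt (x^2 + tau) = x^2 + tau) by (apply sqrt_sqrt; lra).
  set (q := sqrt (x^2 + tau)) in *. rewrite <- Hq. field. lra.
Qed.

Lemma wf_der tau x : 0 <= tau -> 0 < x -> is_derive (wf tau) x (wf' tau x).
Proof.
  intros Ht Hx. unfold wf, wf'. assert (0 < x^2 + tau) by (apply pos_sq; auto).
  assert (0 < sqrt (x^2 + tau)) by (apply sqrt_lt_R0; auto).
  auto_derive; replace (x * (x * 1)) with (x ^ 2) by ring.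
  repeat split; auto; lra.
  assert (Hq : sqrt (x^2 + tau) * sqrt (x^2 + tau) = x^2 + tau) by (apply sqrt_sqrt; lra).
  set (q := sqrt (x^2 + tau)) in *. assert (Ht2 : tau = q * q - x ^ 2) by lra. rewrite Ht2. field. split; [lra|]. replace (x ^ 2 + (q * q - x ^ 2)) with (q * q) by ring. nra.
Qed.

Lemma qf'_cont tau x : 0 <= tau -> 0 < x -> continuous (qf' tau) x.
Proof.
  intros Ht Hx. unfold qf'. assert (0 < x^2 + tau) by (apply pos_sq; auto).
  assert (0 < sqrt (x^2 + tau)) by (apply sqrt_lt_R0; auto).
  cont. apply Rgt_not_eq, Rmult_lt_0_compat; auto.
Qed.
Lemma wf'_cont tau x : 0 <= tau -> 0 < x -> continuous (wf' tau) x.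
Proof.
  intros Ht Hx. unfold wf'. assert (0 < x^2 + tau) by (apply pos_sq; auto).
  assert (0 < sqrt (x^2 + tau)) by (apply sqrt_lt_R0; auto).
  cont. apply Rgt_not_eq, Rmult_lt_0_compat; auto.
Qed.

Lemma qf_pos tau x : 0 <= tau -> 0 < x -> 0 < qf tau x.
Proof. intros. unfold qf. apply Rinv_0_lt_compat, sqrt_lt_R0, pos_sq; auto. Qed.

Lemma qf_le_inv tau x : 0 <= tau -> 0 < x -> qf tau x <= / x.
Proof.
  intros. unfold qf. apply Rinv_le_contravar; auto.
  rewrite <- (sqrt_pow2 x) at 1 by lra. apply sqrt_le_1_alt. lra.
Qed.

Lemma wf_bounds tau x : 0 <= tau -> 0 < x -> 0 <= wf tau x <= 1.
Proof.
  intros. unfold wf. assert (0 < sqrt (x^2 + tau)) by (apply sqrt_lt_R0, pos_sq; auto).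
  assert (x <= sqrt (x^2 + tau)).
  { rewrite <- (sqrt_pow2 x) at 1 by lra. apply sqrt_le_1_alt. lra. }
  split. apply Rdiv_le_0_compat; lra.
  apply Rmult_le_reg_r with (sqrt (x^2 + tau)); auto. field_simplify; lra.
Qed.

Lemma psi_eq_q tau om x : 0 <= tau -> 0 < x -> psi tau om x = x * (om x * qf tau x).
Proof. intros. unfold psi, qf. field. apply Rgt_not_eq, sqrt_lt_R0, pos_sq; auto. Qed.
Lemma psi_eq_w tau om x : psi tau om x = 1 * (om x * wf tau x).
Proof. unfold psi, wf. ring. Qed.

Lemma psi_bound a0 tau om x : Hom a0 om -> 0 <= tau -> 0 < x -> Rabs (psi tau om x) <= a0.
Proof.
  intros Hm Ht Hx. rewrite psi_eq_w. destruct Hm as [_ [_ H]]. destruct (H x Hx).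
  destruct (wf_bounds tau x Ht Hx). rewrite Rmult_1_l, Rabs_pos_eq by (apply Rmult_le_pos; lra).
  nra.
Qed.

Lemma Fth_cont s m b sg tau om th a0 x : Hsb m b sg -> Hom a0 om -> 0 <= tau -> 0 < x ->
  continuous (Fth s m b sg tau om th) x.
Proof.
  intros Hs Hm Ht Hx. unfold Fth, psi.
  assert (0 < sqrt (x^2 + tau)) by (apply sqrt_lt_R0, pos_sq; auto).
  assert (continuous om x) by (eapply om_cont; eauto).
  assert (continuous (phase s m b sg) x) by (eapply is_derive_cont; apply phase_derive; eauto).
  cont. lra.
Qed.

Lemma Fth_triv s m b sg tau om th a0 u v : Hsb m b sg -> Hom a0 om -> 0 <= tau -> 0 < u -> u <= v ->
  Rabs (RInt (Fth s m b sg tau om th) u v) <= (v - u) * a0.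
Proof.
  intros Hs Hm Ht Hu Huv. apply abs_RInt_le_const; auto.
  apply exRI; auto. intros; apply (Fth_cont s m b sg tau om th a0); auto; lra.
  intros t Ht'. unfold Fth. rewrite Rabs_mult.
  assert (Rabs (psi tau om t) <= a0) by (apply psi_bound; auto; lra).
  assert (Rabs (cos (phase s m b sg t + th)) <= 1) by apply Rabs_cos_le_1.
  assert (0 <= Rabs (psi tau om t)) by apply Rabs_pos.
  assert (0 <= Rabs (cos (phase s m b sg t + th))) by apply Rabs_pos. nra.
Qed.

Lemma hh'_sign s m b sg u v : Hsb m b sg -> 0 < u -> (s = 1 \/ s = -1) ->
  (forall x, u <= x <= v -> 0 <= hh' s m b sg x) \/ (forall x, u <= x <= v -> hh' s m b sg x <= 0).
Proof.
  intros Hs Hu [E|E]; subst s; [right|left]; intros x Hx; unfold hh';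
  assert (0 <= S3 m b sg x) by (apply S3_nonneg; auto; lra); assert (0 < x) by lra; nra.
Qed.

Lemma IB_FD s m b sg tau om th a0 u v d Q : Hsb m b sg -> Hom a0 om -> 0 <= tau -> (s = 1 \/ s = -1) ->
  0 < u -> u <= v -> 0 < d ->
  ((forall x, u <= x <= v -> d <= hh s m b sg x) \/ (forall x, u <= x <= v -> hh s m b sg x <= - d)) ->
  (forall x, u <= x <= v -> qf tau x <= Q) ->
  Rabs (RInt (Fth s m b sg tau om th) u v) <= 5 * a0 * Q / d.
Proof.
  intros Hs Hm Ht Hs1 Hu Huv Hd Hh HQ.
  rewrite (RInt_ext _ (fun x => cos (phase s m b sg x + th) * (x * (om x * qf tau x)))).
  2:{ intros x Hx. rewrite Rmin_left, Rmax_right in Hx by lra.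
       assert (E : Fth s m b sg tau om th x = cos (phase s m b sg x + th) * (x * (om x * qf tau x)))
         by (unfold Fth; rewrite psi_eq_q by (auto; lra); ring). exact E. }
  assert (Ha0 : 0 <= a0) by (destruct Hm as [_ [_ H]]; destruct (H u Hu); lra).
  assert (HQ0 : 0 <= Q) by (specialize (HQ u ltac:(lra)); generalize (qf_pos tau u Ht Hu); lra).
  replace (5 * a0 * Q / d) with ((3 * (a0 * Q) + 2 * a0 * Q) / d) by (field; lra).
  apply (FD (phase s m b sg) (fun x => x) (hh s m b sg) (hh' s m b sg) (fun x => om x * qf tau x)
           (fun x => Derive om x * qf tau x + om x * qf' tau x)); auto.
  - intros x Hx. apply phase_derive; auto; lra.
  - intros x Hx. apply hh_derive; auto; lra.
  - intros x Hx. apply (is_derive_mult om (qf tau)). apply (om_der a0); auto; lra.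
    apply qf_der; auto; lra. intros; apply Rmult_comm.
  - intros x Hx. split; [apply c_id|]. split. apply hh'_cont; auto; lra.
    assert (continuous om x) by (eapply om_cont; eauto; lra).
    assert (continuous (Derive om) x) by (eapply om'_cont; eauto; lra).
    assert (continuous (qf tau) x) by (eapply is_derive_cont; apply qf_der; auto; lra).
    assert (continuous (qf' tau) x) by (apply qf'_cont; auto; lra).
    cont.
  - apply hh'_sign; auto.
  - intros x Hx. destruct Hm as [_ [_ H]]. destruct (H x ltac:(lra)).
    assert (0 < qf tau x) by (apply qf_pos; auto; lra). specialize (HQ x Hx).
    rewrite Rabs_pos_eq by (apply Rmult_le_pos; lra). apply Rmult_le_compat; lra.
  - apply (Vprod om (qf tau) (Derive om) (qf' tau) u v a0 Q); auto.
    + intros x Hx. apply (om_der a0); auto; lra.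
    + intros x Hx. apply qf_der; auto; lra.
    + intros x Hx. split. apply (om'_cont a0); auto; lra. apply qf'_cont; auto; lra.
    + apply (om'_sign a0); auto.
    + right. intros x Hx. unfold qf'. assert (0 < x^2 + tau) by (apply pos_sq; auto; lra).
      assert (0 < sqrt (x^2 + tau)) by (apply sqrt_lt_R0; auto).
      unfold Rdiv. apply Rmult_le_0_r. lra. left; apply Rinv_0_lt_compat, Rmult_lt_0_compat; auto.
    + intros x Hx. destruct Hm as [_ [_ H]]. apply H; lra.
    + intros x Hx. split. left; apply qf_pos; auto; lra. auto.
Qed.

Lemma IB_SDx s m b sg tau om th a0 u v mu Q : Hsb m b sg -> Hom a0 om -> 0 <= tau -> (s = 1 \/ s = -1) ->
  0 < u -> u <= v -> 0 < mu ->
  (forall x, u <= x <= v -> mu * x <= hh' s m b sg x) ->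
  (forall x, u <= x <= v -> qf tau x <= Q) ->
  Rabs (RInt (Fth s m b sg tau om th) u v) <= 12 * a0 * Q / sqrt mu.
Proof.
  intros Hs Hm Ht Hs1 Hu Huv Hmu Hh HQ.
  rewrite (RInt_ext _ (fun x => cos (phase s m b sg x + th) * (x * (om x * qf tau x)))).
  2:{ intros x Hx. rewrite Rmin_left, Rmax_right in Hx by lra.
       assert (E : Fth s m b sg tau om th x = cos (phase s m b sg x + th) * (x * (om x * qf tau x)))
         by (unfold Fth; rewrite psi_eq_q by (auto; lra); ring). exact E. }
  assert (Ha0 : 0 <= a0) by (destruct Hm as [_ [_ H]]; destruct (H u Hu); lra).
  assert (HQ0 : 0 <= Q) by (specialize (HQ u ltac:(lra)); generalize (qf_pos tau u Ht Hu); lra).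
  replace (12 * a0 * Q / sqrt mu) with ((8 * (a0 * Q) + 2 * (2 * a0 * Q)) / sqrt mu) by (field; apply Rgt_not_eq, sqrt_lt_R0; lra).
  apply (SD (phase s m b sg) (fun x => x) (hh s m b sg) (hh' s m b sg) (fun x => om x * qf tau x)
           (fun x => Derive om x * qf tau x + om x * qf' tau x)); auto.
  - intros x Hx. apply phase_derive; auto; lra.
  - intros x Hx. apply hh_derive; auto; lra.
  - intros x Hx. apply (is_derive_mult om (qf tau)). apply (om_der a0); auto; lra.
    apply qf_der; auto; lra. intros; apply Rmult_comm.
  - intros x Hx. split; [apply c_id|]. split. apply hh'_cont; auto; lra.
    assert (continuous om x) by (eapply om_cont; eauto; lra).
    assert (continuous (Derive om) x) by (eapply om'_cont; eauto; lra).
    assert (continuous (qf tau) x) by (eapply is_derive_cont; apply qf_der; auto; lra).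
    assert (continuous (qf' tau) x) by (apply qf'_cont; auto; lra).
    cont.
  - intros; lra.
  - intros x Hx. destruct Hm as [_ [_ H]]. destruct (H x ltac:(lra)).
    assert (0 < qf tau x) by (apply qf_pos; auto; lra). specialize (HQ x Hx).
    rewrite Rabs_pos_eq by (apply Rmult_le_pos; lra). apply Rmult_le_compat; lra.
  - apply (Vprod om (qf tau) (Derive om) (qf' tau) u v a0 Q); auto.
    + intros x Hx. apply (om_der a0); auto; lra.
    + intros x Hx. apply qf_der; auto; lra.
    + intros x Hx. split. apply (om'_cont a0); auto; lra. apply qf'_cont; auto; lra.
    + apply (om'_sign a0); auto.
    + right. intros x Hx. unfold qf'. assert (0 < x^2 + tau) by (apply pos_sq; auto; lra).
      assert (0 < sqrt (x^2 + tau)) by (apply sqrt_lt_R0; auto).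
      unfold Rdiv. apply Rmult_le_0_r. lra. left; apply Rinv_0_lt_compat, Rmult_lt_0_compat; auto.
    + intros x Hx. destruct Hm as [_ [_ H]]. apply H; lra.
    + intros x Hx. split. left; apply qf_pos; auto; lra. auto.
Qed.

Lemma IB_SD1 s m b sg tau om th a0 u v mu : Hsb m b sg -> Hom a0 om -> 0 <= tau -> (s = 1 \/ s = -1) ->
  0 < u -> u <= v -> 0 < mu ->
  (forall x, u <= x <= v -> mu <= hh s m b sg x + x * hh' s m b sg x) ->
  Rabs (RInt (Fth s m b sg tau om th) u v) <= 12 * a0 / sqrt mu.
Proof.
  intros Hs Hm Ht Hs1 Hu Huv Hmu Hh.
  rewrite (RInt_ext _ (fun x => cos (phase s m b sg x + th) * (1 * (om x * wf tau x)))).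
  2:{ intros x Hx.
       assert (E : Fth s m b sg tau om th x = cos (phase s m b sg x + th) * (1 * (om x * wf tau x)))
         by (unfold Fth; rewrite psi_eq_w; ring). exact E. }
  assert (Ha0 : 0 <= a0) by (destruct Hm as [_ [_ H]]; destruct (H u Hu); lra).
  replace (12 * a0 / sqrt mu) with ((8 * (a0 * 1) + 2 * (2 * a0 * 1)) / sqrt mu) by (field; apply Rgt_not_eq, sqrt_lt_R0; lra).
  apply (SD (phase s m b sg) (fun _ => 1) (fun x => x * hh s m b sg x) (fun x => hh s m b sg x + x * hh' s m b sg x)
          (fun x => om x * wf tau x) (fun x => Derive om x * wf tau x + om x * wf' tau x)); auto.
  - intros x Hx. rewrite Rmult_1_l. apply phase_derive; auto; lra.
  - intros x Hx. apply (is_derive_ext (fun y => y * hh s m b sg y)). reflexivity.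
    replace (hh s m b sg x + x * hh' s m b sg x) with (1 * hh s m b sg x + x * hh' s m b sg x) by ring.
    apply (is_derive_mult (fun y => y) (hh s m b sg)). apply (is_derive_id (K:=R_AbsRing)).
    apply hh_derive; auto; lra. intros; apply Rmult_comm.
  - intros x Hx. apply (is_derive_mult om (wf tau)). apply (om_der a0); auto; lra.
    apply wf_der; auto; lra. intros; apply Rmult_comm.
  - intros x Hx. split; [apply c_const|]. split.
    assert (continuous (hh s m b sg) x) by (apply hh_cont; auto; lra).
    assert (continuous (hh' s m b sg) x) by (apply hh'_cont; auto; lra). cont.
    assert (continuous om x) by (eapply om_cont; eauto; lra).
    assert (continuous (Derive om) x) by (eapply om'_cont; eauto; lra).
    assert (continuous (wf tau) x) by (eapply is_derive_cont; apply wf_der; auto; lra).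
    assert (continuous (wf' tau) x) by (apply wf'_cont; auto; lra).
    cont.
  - intros; lra.
  - intros x Hx. rewrite Rmult_1_r. apply Hh; auto.
  - intros x Hx. destruct Hm as [_ [_ H]]. destruct (H x ltac:(lra)).
    destruct (wf_bounds tau x Ht ltac:(lra)).
    rewrite Rabs_pos_eq by (apply Rmult_le_pos; lra). nra.
  - apply (Vprod om (wf tau) (Derive om) (wf' tau) u v a0 1); auto.
    + intros x Hx. apply (om_der a0); auto; lra.
    + intros x Hx. apply wf_der; auto; lra.
    + intros x Hx. split. apply (om'_cont a0); auto; lra. apply wf'_cont; auto; lra.
    + apply (om'_sign a0); auto.
    + left. intros x Hx. unfold wf'. assert (0 < x^2 + tau) by (apply pos_sq; auto; lra).
      assert (0 < sqrt (x^2 + tau)) by (apply sqrt_lt_R0; auto).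
      apply Rdiv_le_0_compat; auto. apply Rmult_lt_0_compat; auto.
    + intros x Hx. destruct Hm as [_ [_ H]]. apply H; lra.
    + intros x Hx. apply wf_bounds; auto; lra.
Qed.

Lemma split_at (f : R -> R) u v p K1 K2 : u <= v -> 0 <= K1 -> 0 <= K2 ->
  (forall x, u <= x <= v -> continuous f x) ->
  (forall u' v', u <= u' -> u' <= v' -> v' <= v -> v' <= p -> Rabs (RInt f u' v') <= K1) ->
  (forall u' v', u <= u' -> u' <= v' -> v' <= v -> p <= u' -> Rabs (RInt f u' v') <= K2) ->
  Rabs (RInt f u v) <= K1 + K2.
Proof.
  intros Huv HK1 HK2 Hc H1 H2.
  destruct (Rle_lt_dec p u). { assert (Rabs (RInt f u v) <= K2) by (apply H2; lra). lra. }
  destruct (Rle_lt_dec v p). { assert (Rabs (RInt f u v) <= K1) by (apply H1; lra). lra. }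
  rewrite (RInt_chasles3 f u p v); try lra; auto.
  eapply Rle_trans. apply Rabs_triang. apply Rplus_le_compat; [apply H1 | apply H2]; lra.
Qed.

Lemma split_h (f h : R -> R) u v th K1 K2 : u <= v -> 0 <= K1 -> 0 <= K2 ->
  (forall x, u <= x <= v -> continuous f x) ->
  (forall x, u <= x <= v -> continuous h x) ->
  (forall x y, u <= x -> x <= y -> y <= v -> h x <= h y) ->
  (forall v', u < v' -> v' <= v -> (forall x, u <= x <= v' -> h x <= th) -> Rabs (RInt f u v') <= K1) ->
  (forall u', u <= u' -> u' < v -> (forall x, u' <= x <= v -> th <= h x) -> Rabs (RInt f u' v) <= K2) ->
  Rabs (RInt f u v) <= K1 + K2.
Proof.
  intros Huv HK1 HK2 Hc Hch Hm H1 H2.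
  destruct (split_mono h u v th Huv Hch Hm) as [c [Hc1 [Ha Hb]]].
  rewrite (RInt_chasles3 f u c v); try lra; auto.
  eapply Rle_trans. apply Rabs_triang. apply Rplus_le_compat.
  - destruct Ha as [E|Ha]. subst. rewrite RInt_point. unfold zero; simpl. rewrite Rabs_R0; lra.
    destruct (Req_dec c u) as [E|Hne]. subst. rewrite RInt_point. unfold zero; simpl. rewrite Rabs_R0; lra.
    apply H1; auto; lra.
  - destruct Hb as [E|Hb]. subst. rewrite RInt_point. unfold zero; simpl. rewrite Rabs_R0; lra.
    destruct (Req_dec c v) as [E|Hne]. subst. rewrite RInt_point. unfold zero; simpl. rewrite Rabs_R0; lra.
    apply H2; auto; lra.
Qed.

Lemma sum_bound_lt (a : nat -> R) m c : (1 <= m)%nat -> (forall j, (1 <= j <= m)%nat -> a j < c) ->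
  sum_n_m a 1 m < INR m * c.
Proof.
  induction m; intros Hm H. lia.
  rewrite sum1_S, S_INR. assert (a (S m) < c) by (apply H; lia).
  destruct m. rewrite sum1_0. simpl. lra.
  assert (sum_n_m a 1 (S m) < INR (S m) * c) by (apply IHm; [lia | intros; apply H; lia]). lra.
Qed.

Lemma exists_ge (a : nat -> R) m c : (1 <= m)%nat -> INR m * c <= sum_n_m a 1 m ->
  exists j, (1 <= j <= m)%nat /\ c <= a j.
Proof.
  intros Hm H. destruct (Rle_lt_dec c (a 1%nat)) as [H1|H1]. exists 1%nat; split; auto; lia.
  clear H1.
  assert (Hd : (exists j, (1 <= j <= m)%nat /\ c <= a j) \/ (forall j, (1 <= j <= m)%nat -> a j < c)).
  { clear H Hm. induction m. right; intros; lia.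
    destruct IHm as [[j [Hj Hj']]|Hall]. left; exists j; split; auto; lia.
    destruct (Rle_lt_dec c (a (S m))). left; exists (S m); split; auto; lia.
    right. intros j Hj. destruct (Nat.eq_dec j (S m)). subst; auto. apply Hall; lia. }
  destruct Hd as [Hd|Hd]; auto.
  assert (sum_n_m a 1 m < INR m * c) by (apply sum_bound_lt; auto). lra.
Qed.

Definition Hsig (m : nat) (sg : nat -> R) := 0 <= sg 1%nat /\ forall j, (1 <= j <= m)%nat -> sg j <= sg 1%nat.

Lemma hh_incr s m b sg u v : Hsb m b sg -> s = -1 -> 0 < u ->
  forall x y, u <= x -> x <= y -> y <= v -> hh s m b sg x <= hh s m b sg y.
Proof.
  intros Hs E Hu. apply (incr_of_deriv _ (hh' s m b sg)).
  intros; apply hh_derive; auto; lra. intros; apply hh'_cont; auto; lra.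
  intros x Hx. unfold hh'. subst. assert (0 <= S3 m b sg x) by (apply S3_nonneg; auto; lra). nra.
Qed.

Lemma x2S3_ge m b sg x : Hsb m b sg -> Hsig m sg -> 0 < x ->
  x^2 / (x^2 + sg 1%nat) * S1 m b sg x <= x^2 * S3 m b sg x.
Proof.
  intros [Hs0 Hb] [Hs1 Hsg] Hx. unfold S1, S3. rewrite <- !sum_scal. apply sum_le.
  intros j Hj. assert (0 < x^2 + sg j) by (apply pos_sq; auto).
  assert (0 < sqrt (x^2 + sg j)) by (apply sqrt_lt_R0; auto).
  assert (0 < x^2 + sg 1%nat) by (apply pos_sq; auto).
  assert (/ (x^2 + sg 1%nat) <= / (x^2 + sg j)) by (apply Rinv_le_contravar; auto; generalize (Hsg j Hj); lra).
  assert (0 <= b j / sqrt (x ^ 2 + sg j) * x^2) by (apply Rmult_le_pos; [apply Rdiv_le_0_compat; [left; apply Hb; auto | auto] | nra]).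
  replace (x ^ 2 / (x ^ 2 + sg 1%nat) * (b j / sqrt (x ^ 2 + sg j))) with
    ((b j / sqrt (x ^ 2 + sg j) * x^2) * / (x ^ 2 + sg 1%nat)) by (field; lra).
  replace (x ^ 2 * (b j / ((x ^ 2 + sg j) * sqrt (x ^ 2 + sg j)))) with
    ((b j / sqrt (x ^ 2 + sg j) * x^2) * / (x ^ 2 + sg j)) by (field; lra).
  apply Rmult_le_compat_l; auto.
Qed.

Lemma phi2_bound m b sg x L : Hsb m b sg -> Hsig m sg -> 0 < L -> L <= x ->
  - ((L^2 / (L^2 + sg 1%nat)) / 2) <= hh (-1) m b sg x ->
  (L^2 / (L^2 + sg 1%nat)) / 2 <= hh (-1) m b sg x + x * hh' (-1) m b sg x.
Proof.
  intros Hs Hsg HL HLx Hh.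
  assert (Hx : 0 < x) by lra.
  assert (Hs1 : 0 <= sg 1%nat) by apply Hsg.
  assert (HS := S1_nonneg m b sg x Hs Hx).
  assert (HS3 := x2S3_ge m b sg x Hs Hsg Hx).
  set (mu0 := L^2 / (L^2 + sg 1%nat)) in *.
  set (t := x^2 / (x^2 + sg 1%nat)) in *.
  assert (HL2 : 0 < L^2 + sg 1%nat) by (apply pos_sq; auto).
  assert (Hx2 : 0 < x^2 + sg 1%nat) by (apply pos_sq; auto).
  assert (Ht1 : t <= 1). { unfold t. apply Rmult_le_reg_r with (x^2 + sg 1%nat); auto. field_simplify; lra. }
  assert (Htm : mu0 <= t).
  { unfold mu0, t. apply Rmult_le_reg_r with ((L^2 + sg 1%nat) * (x^2 + sg 1%nat)). nra.
    field_simplify; try lra. assert (L^2 <= x^2) by nra. nra. }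
  unfold hh, hh' in *.
  replace (1 + -1 * S1 m b sg x + x * (- -1 * (x * S3 m b sg x))) with (1 - S1 m b sg x + x^2 * S3 m b sg x) by ring.
  destruct (Rle_lt_dec (S1 m b sg x) 1).
  - assert (0 <= mu0) by (unfold mu0; apply Rdiv_le_0_compat; nra). nra.
  - nra.
Qed.

Lemma L_facts (s1 : R) : 0 <= s1 ->
  let L := sqrt (sqrt (1 + s1)) in 1 <= L /\ L^2 = sqrt (1 + s1) /\ s1 = L^4 - 1.
Proof.
  intros Hs L.
  assert (H1 : 1 <= sqrt (1 + s1)) by (apply Rle_trans with (sqrt 1); [rewrite sqrt_1; lra | apply sqrt_le_1_alt; lra]).
  assert (H2 : 1 <= L) by (unfold L; apply Rle_trans with (sqrt 1); [rewrite sqrt_1; lra | apply sqrt_le_1_alt; lra]).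
  assert (H3 : L^2 = sqrt (1 + s1)) by (unfold L; simpl; rewrite Rmult_1_r; apply sqrt_sqrt; lra).
  split; auto. split; auto.
  replace (L^4) with (L^2 * L^2) by ring. rewrite H3. rewrite sqrt_sqrt; lra.
Qed.

Lemma N1 (a0 L s1 : R) : 0 <= a0 -> 1 <= L -> s1 = L^4 - 1 ->
  5 * a0 * / L / (L^2 / (L^2 + s1) / 2) <= 20 * a0 * L.
Proof.
  intros Ha HL Hs. subst s1.
  assert (0 < L^2) by nra. assert (1 <= L^2) by nra. assert (L^2 <= L^4) by (replace (L^4) with (L^2*L^2) by ring; nra).
  assert (0 < L^2 + (L^4 - 1)) by nra.
  replace (5 * a0 * / L / (L ^ 2 / (L ^ 2 + (L ^ 4 - 1)) / 2)) with (10 * a0 * (L^2 + (L^4 - 1)) / L^3)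
    by (field; repeat split; apply Rgt_not_eq; nra).
  apply Rmult_le_reg_r with (L^3). nra.
  replace (10 * a0 * (L ^ 2 + (L ^ 4 - 1)) / L ^ 3 * L ^ 3) with (10 * a0 * (L ^ 2 + (L ^ 4 - 1))) by (field; repeat split; apply Rgt_not_eq; nra).
  replace (20 * a0 * L * L ^ 3) with (10 * a0 * (2 * L^4)) by ring.
  apply Rmult_le_compat_l; nra.
Qed.

Lemma N2 (a0 L s1 : R) : 0 <= a0 -> 1 <= L -> s1 = L^4 - 1 ->
  12 * a0 / sqrt (L^2 / (L^2 + s1) / 2) <= 24 * a0 * L.
Proof.
  intros Ha HL Hs. subst s1.
  assert (0 < L^2) by nra. assert (1 <= L^2) by nra. assert (L^2 <= L^4) by (replace (L^4) with (L^2*L^2) by ring; nra).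
  assert (0 < L^2 + (L^4 - 1)) by nra.
  assert (Hq : / (2 * L) <= sqrt (L ^ 2 / (L ^ 2 + (L ^ 4 - 1)) / 2)).
  { rewrite <- (sqrt_pow2 (/ (2 * L))) by (left; apply Rinv_0_lt_compat; lra).
    apply sqrt_le_1_alt.
    replace ((/ (2 * L))^2) with (/ (4 * L^2)) by (field; lra).
    replace (L ^ 2 / (L ^ 2 + (L ^ 4 - 1)) / 2) with (/ (2 * (L ^ 2 + (L ^ 4 - 1)) / L^2)) by (field; repeat split; apply Rgt_not_eq; nra).
    apply Rinv_le_contravar. apply Rdiv_lt_0_compat; nra.
    apply Rmult_le_reg_r with (L^2); auto. field_simplify; nra. }
  assert (0 < / (2 * L)) by (apply Rinv_0_lt_compat; lra).
  unfold Rdiv. apply Rle_trans with (12 * a0 * / / (2 * L)).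
  apply Rmult_le_compat_l. nra. apply Rinv_le_contravar; auto.
  rewrite Rinv_inv. lra.
Qed.

Lemma A_bound m b sg tau om a0 th u v : Hsb m b sg -> Hsig m sg -> Hom a0 om -> 0 <= tau -> 0 < u -> u <= v ->
  Rabs (RInt (Fth (-1) m b sg tau om th) u v) <= 45 * a0 * sqrt (sqrt (1 + sg 1%nat)).
Proof.
  intros Hs Hsg Hm Ht Hu Huv.
  assert (Hs1 : 0 <= sg 1%nat) by apply Hsg.
  destruct (L_facts (sg 1%nat) Hs1) as [HL [HL2 HL4]].
  set (L := sqrt (sqrt (1 + sg 1%nat))) in *.
  assert (Ha0 : 0 <= a0) by (destruct Hm as [_ [_ H]]; destruct (H u Hu); lra).
  set (mu0 := L^2 / (L^2 + sg 1%nat)).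
  assert (HL2' : 1 <= L^2) by (simpl; nra).
  assert (Hmu0 : 0 < mu0) by (unfold mu0; apply Rdiv_lt_0_compat; lra).
  replace (45 * a0 * L) with (a0 * L + (20 * a0 * L + 24 * a0 * L)) by ring.
  assert (Hcf : forall x, u <= x <= v -> continuous (Fth (-1) m b sg tau om th) x).
  { intros; apply (Fth_cont _ _ _ _ _ _ _ a0); auto; lra. }
  apply (split_at _ u v L); auto; try nra.
  - intros u' v' H1 H2 H3 H4. eapply Rle_trans. apply (Fth_triv _ _ _ _ _ _ _ a0); auto; lra. nra.
  - intros u' v' H1 H2 H3 H4.
    apply (split_h _ (hh (-1) m b sg) u' v' (- (mu0 / 2))); auto; try nra.
    + intros; apply Hcf; lra.
    + intros; apply hh_cont; auto; lra.
    + intros x y Hx Hxy Hy; apply (hh_incr (-1) m b sg u' v'); auto; lra.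
    + intros v'' Hv1 Hv2 Hh.
      eapply Rle_trans. apply (IB_FD _ _ _ _ _ _ _ a0 u' v'' (mu0 / 2) (/ L));
        [auto|auto|auto|right; reflexivity|lra|lra|lra| right; exact Hh | ].
      intros y Hy. eapply Rle_trans. apply qf_le_inv; auto; lra. apply Rinv_le_contravar; lra.
      apply N1; auto.
    + intros u'' Hu1 Hu2 Hh.
      eapply Rle_trans. apply (IB_SD1 _ _ _ _ _ _ _ a0 u'' v' (mu0 / 2));
        [auto|auto|auto|right; reflexivity|lra|lra|lra| ].
      intros y Hy. apply phi2_bound; [auto|auto|lra|lra| apply Hh; lra].
      apply N2; auto.
Qed.

Lemma qfk_bound m b sg k x : Hsb m b sg -> (1 <= k <= m)%nat -> 0 < x ->
  -1 <= hh (-1) m b sg x -> qf (sg k) x <= 2 / b k.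
Proof.
  intros [Hs Hb] Hk Hx Hh. unfold hh in Hh.
  assert (HS : b k / sqrt (x^2 + sg k) <= S1 m b sg x).
  { unfold S1. apply (single_le_sum (fun j => b j / sqrt (x ^ 2 + sg j))); auto.
    intros j Hj. apply Rdiv_le_0_compat. left; auto. apply sqrt_lt_R0, pos_sq; auto. }
  assert (Hbk : 0 < b k) by auto.
  assert (0 < sqrt (x^2 + sg k)) by (apply sqrt_lt_R0, pos_sq; auto).
  unfold qf. apply Rmult_le_reg_l with (b k); auto.
  replace (b k * (2 / b k)) with 2 by (field; lra).
  replace (b k * / sqrt (x ^ 2 + sg k)) with (b k / sqrt (x ^ 2 + sg k)) by reflexivity. lra.
Qed.

Lemma mu_bound m b sg x : Hsb m b sg -> (1 <= m)%nat -> 0 < x ->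
  hh (-1) m b sg x <= 1/2 ->
  / (8 * INR m ^ 3 * max_1n b m ^ 2) * x <= hh' (-1) m b sg x.
Proof.
  intros [Hs Hb] Hm Hx Hh. unfold hh in Hh. unfold hh'.
  set (n := INR m). set (M := max_1n b m).
  assert (Hn : 1 <= n) by (unfold n; apply (le_INR 1); lia).
  assert (HS1 : n * (/ (2 * n)) <= S1 m b sg x) by (replace (n * / (2 * n)) with (1/2) by (field; lra); lra).
  destruct (exists_ge _ m _ Hm HS1) as [j [Hj Hj']].
  assert (Hbj : 0 < b j) by auto.
  assert (HbM : b j <= M) by (apply max_1n_ge; auto).
  assert (Hv : 0 < x^2 + sg j) by (apply pos_sq; auto).
  assert (Hsq : 0 < sqrt (x^2 + sg j)) by (apply sqrt_lt_R0; auto).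
  assert (Hsq2 : sqrt (x^2 + sg j) * sqrt (x^2 + sg j) = x^2 + sg j) by (apply sqrt_sqrt; lra).
  set (y := b j / sqrt (x^2 + sg j)) in *.
  assert (Hterm : b j / ((x^2 + sg j) * sqrt (x^2 + sg j)) = y^3 / (b j)^2).
  { unfold y. clear - Hsq2 Hsq Hbj. set (sq := sqrt (x ^ 2 + sg j)) in *. rewrite <- Hsq2. field. split; lra. }
  assert (HS3 : b j / ((x^2 + sg j) * sqrt (x^2 + sg j)) <= S3 m b sg x).
  { unfold S3. apply (single_le_sum (fun j => b j / ((x ^ 2 + sg j) * sqrt (x ^ 2 + sg j)))); auto.
    intros i Hi. assert (0 < x^2 + sg i) by (apply pos_sq; auto).
    apply Rdiv_le_0_compat. left; auto. apply Rmult_lt_0_compat; auto. apply sqrt_lt_R0; auto. }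
  assert (Hy : / (2 * n) <= y) by auto.
  assert (Hy0 : 0 < / (2 * n)) by (apply Rinv_0_lt_compat; lra).
  assert (Hy3 : (/ (2 * n))^3 <= y^3) by (apply pow_incr; lra).
  assert (HM2 : / M^2 <= / (b j)^2) by (apply Rinv_le_contravar; [nra | apply pow_incr; lra]).
  assert (Hbig : / (8 * n ^ 3 * M ^ 2) <= y^3 / (b j)^2).
  { replace (/ (8 * n ^ 3 * M ^ 2)) with ((/ (2 * n))^3 * / M^2) by (field; split; nra).
    unfold Rdiv. apply Rmult_le_compat; try lra. apply pow_le; lra. left; apply Rinv_0_lt_compat; nra. }
  rewrite <- Hterm in Hbig.
  replace (- -1 * (x * S3 m b sg x)) with (S3 m b sg x * x) by ring.
  apply Rmult_le_compat_r; lra.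
Qed.

Lemma mu_sqrt m M : 1 <= INR m -> 0 < M ->
  / sqrt (/ (8 * INR m ^ 3 * M ^ 2)) <= 3 * (INR m * sqrt (INR m) * M).
Proof.
  intros Hn HM. set (n := INR m) in *.
  assert (Hs : 0 < sqrt n) by (apply sqrt_lt_R0; lra).
  assert (Hs2 : sqrt n * sqrt n = n) by (apply sqrt_sqrt; lra).
  assert (Hp : 0 < 3 * (n * sqrt n * M)) by (apply Rmult_lt_0_compat; try lra; apply Rmult_lt_0_compat; nra).
  rewrite <- (Rinv_inv (3 * (n * sqrt n * M))).
  apply Rinv_le_contravar. apply Rinv_0_lt_compat; auto.
  rewrite <- (sqrt_pow2 (/ (3 * (n * sqrt n * M)))) by (left; apply Rinv_0_lt_compat; auto).
  apply sqrt_le_1_alt.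
  replace ((/ (3 * (n * sqrt n * M))) ^ 2) with (/ (9 * (n * (sqrt n * sqrt n)) * n * M^2)) by (field; split; nra).
  rewrite Hs2.
  assert (0 < n^3) by (apply pow_lt; lra). assert (0 < M^2) by (apply pow_lt; lra).
  apply Rinv_le_contravar. apply Rmult_lt_0_compat; [apply Rmult_lt_0_compat; lra | lra].
  replace (9 * n * n * M ^ 2) with (9 * n^2 * M^2) by ring.
  replace (9 * (n * n) * n * M ^ 2) with (9 * n^3 * M^2) by ring.
  assert (0 < n^3 * M^2) by (apply Rmult_lt_0_compat; lra). lra.
Qed.

Lemma B_bound m b sg om a0 th k u v : Hsb m b sg -> Hom a0 om -> (1 <= m)%nat -> (1 <= k <= m)%nat ->
  0 < u -> u <= v ->
  Rabs (RInt (Fth (-1) m b sg (sg k) om th) u v) <=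
    88 * a0 * (INR m * sqrt (INR m) * / b k * max_1n b m).
Proof.
  intros Hs Hm Hm1 Hk Hu Huv.
  assert (Ha0 : 0 <= a0) by (destruct Hm as [_ [_ H]]; destruct (H u Hu); lra).
  assert (Htau : 0 <= sg k) by (apply Hs; auto).
  assert (Hbk : 0 < b k) by (apply Hs; auto).
  set (M := max_1n b m). set (n := INR m).
  assert (HbM : b k <= M) by (apply max_1n_ge; auto).
  assert (Hn : 1 <= n) by (unfold n; apply (le_INR 1); lia).
  assert (Hsn : 1 <= sqrt n) by (apply Rle_trans with (sqrt 1); [rewrite sqrt_1; lra | apply sqrt_le_1_alt; lra]).
  set (Bq := n * sqrt n * / b k * M).
  assert (HBq : 1 <= Bq).
  { unfold Bq. assert (1 <= / b k * M).
    { apply Rmult_le_reg_l with (b k); auto. rewrite <- Rmult_assoc, Rinv_r by lra. lra. }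
    assert (1 <= n * sqrt n) by nra.
    replace (n * sqrt n * / b k * M) with ((n * sqrt n) * (/ b k * M)) by ring. nra. }
  apply Rle_trans with (a0 + (5 * a0 + (72 * a0 * Bq + 10 * a0))).
  2:{ nra. }
  assert (Hcf : forall x, u <= x <= v -> continuous (Fth (-1) m b sg (sg k) om th) x).
  { intros; apply (Fth_cont _ _ _ _ _ _ _ a0); auto; lra. }
  assert (Hq1 : forall x, 1 <= x -> qf (sg k) x <= 1).
  { intros x Hx. eapply Rle_trans. apply qf_le_inv; auto; lra. rewrite <- Rinv_1. apply Rinv_le_contravar; lra. }
  apply (split_at _ u v 1); auto; try nra.
  - intros u' v' H1 H2 H3 H4. eapply Rle_trans. apply (Fth_triv _ _ _ _ _ _ _ a0); auto; lra. nra.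
  - intros u' v' H1 H2 H3 H4.
    apply (split_h _ (hh (-1) m b sg) u' v' (-1)); auto; try nra.
    + intros; apply Hcf; lra.
    + intros; apply hh_cont; auto; lra.
    + intros x y Hx Hxy Hy; apply (hh_incr (-1) m b sg u' v'); auto; lra.
    + intros v'' Hv1 Hv2 Hh.
      eapply Rle_trans. apply (IB_FD _ _ _ _ _ _ _ a0 u' v'' 1 1);
        [auto|auto|auto|right; reflexivity|lra|lra|lra| right; exact Hh | ].
      intros y Hy. apply Hq1; lra. lra.
    + intros u'' Hu1 Hu2 Hh.
      apply (split_h _ (hh (-1) m b sg) u'' v' (1/2)); auto; try nra.
      * intros; apply Hcf; lra.
      * intros; apply hh_cont; auto; lra.
      * intros x y Hx Hxy Hy; apply (hh_incr (-1) m b sg u'' v'); auto; lra.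
      * intros v3 Hv1 Hv2 Hh2.
        eapply Rle_trans. apply (IB_SDx _ _ _ _ _ _ _ a0 u'' v3 (/ (8 * n ^ 3 * M ^ 2)) (2 / b k));
          [auto|auto|auto|right; reflexivity|lra|lra| | | ].
        { apply Rinv_0_lt_compat. assert (0 < n ^ 3) by (apply pow_lt; lra).
          assert (0 < M ^ 2) by (apply pow_lt; lra). nra. }
        { intros y Hy. apply mu_bound; [auto|auto|lra|apply Hh2; lra]. }
        { intros y Hy. apply (qfk_bound m); [auto|auto|lra|apply Hh; lra]. }
        assert (Hs3 := mu_sqrt m M Hn ltac:(lra)). fold n in Hs3.
        assert (0 < sqrt (/ (8 * n ^ 3 * M ^ 2))).
        { apply sqrt_lt_R0, Rinv_0_lt_compat. assert (0 < n ^ 3) by (apply pow_lt; lra).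
          assert (0 < M ^ 2) by (apply pow_lt; lra). nra. }
        apply Rle_trans with (12 * a0 * (2 / b k) * (3 * (n * sqrt n * M))).
        { change (12 * a0 * (2 / b k) * / sqrt (/ (8 * n ^ 3 * M ^ 2)) <= 12 * a0 * (2 / b k) * (3 * (n * sqrt n * M))).
          apply Rmult_le_compat_l; auto. apply Rmult_le_pos; [lra|]. apply Rdiv_le_0_compat; lra. }
        right; unfold Bq; field; lra.
      * intros u3 Hu3 Hu4 Hh2.
        eapply Rle_trans. apply (IB_FD _ _ _ _ _ _ _ a0 u3 v' (1/2) 1);
          [auto|auto|auto|right; reflexivity|lra|lra|lra| left; exact Hh2 | ].
        intros y Hy. apply Hq1; lra. lra.
Qed.

Lemma P_bound m b sg tau om a0 th u v : Hsb m b sg -> Hom a0 om -> 0 <= tau -> 0 < u -> u <= v ->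
  Rabs (RInt (Fth 1 m b sg tau om th) u v) <= 6 * a0.
Proof.
  intros Hs Hm Ht Hu Huv.
  assert (Ha0 : 0 <= a0) by (destruct Hm as [_ [_ H]]; destruct (H u Hu); lra).
  replace (6 * a0) with (a0 + 5 * a0) by ring.
  assert (Hcf : forall x, u <= x <= v -> continuous (Fth 1 m b sg tau om th) x).
  { intros; apply (Fth_cont _ _ _ _ _ _ _ a0); auto; lra. }
  apply (split_at _ u v 1); auto; try nra.
  - intros u' v' H1 H2 H3 H4. eapply Rle_trans. apply (Fth_triv _ _ _ _ _ _ _ a0); auto; lra. nra.
  - intros u' v' H1 H2 H3 H4.
    eapply Rle_trans. apply (IB_FD _ _ _ _ _ _ _ a0 u' v' 1 1);
      [auto|auto|auto|left; reflexivity|lra|lra|lra| left | ].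
    { intros x Hx. unfold hh. assert (0 <= S1 m b sg x) by (apply S1_nonneg; auto; lra). lra. }
    { intros y Hy. eapply Rle_trans. apply qf_le_inv; auto; lra. rewrite <- Rinv_1. apply Rinv_le_contravar; lra. }
    lra.
Qed.

Lemma hh_large s m b sg x : Hsb m b sg -> (s = 1 \/ s = -1) -> 0 < x ->
  2 * sum_n_m b 1 m <= x -> 1/2 <= hh s m b sg x.
Proof.
  intros Hs Hs1 Hx Hb. assert (H0 := S1_nonneg m b sg x Hs Hx).
  destruct Hs1 as [E|E]; subst s; unfold hh. lra.
  assert (S1 m b sg x <= sum_n_m b 1 m / x).
  { unfold S1. unfold Rdiv. rewrite Rmult_comm, <- sum_scal. apply sum_le. intros j Hj.
    destruct Hs as [Hs Hb']. assert (0 < b j) by auto.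
    assert (x <= sqrt (x^2 + sg j)).
    { rewrite <- (sqrt_pow2 x) at 1 by lra. apply sqrt_le_1_alt. assert (0 <= sg j) by auto. lra. }
    unfold Rdiv. rewrite (Rmult_comm (/ x)). apply Rmult_le_compat_l; [lra|]. apply Rinv_le_contravar; auto. }
  assert (sum_n_m b 1 m / x <= 1/2).
  { apply Rmult_le_reg_r with x; auto. unfold Rdiv. rewrite Rmult_assoc, Rinv_l by lra. lra. }
  lra.
Qed.

Lemma tail_bound s m b sg tau om a0 th : Hsb m b sg -> Hom a0 om -> 0 <= tau -> (s = 1 \/ s = -1) ->
  forall eps, 0 < eps -> exists B, 0 < B /\ forall u v, B <= u -> u <= v ->
    Rabs (RInt (Fth s m b sg tau om th) u v) <= eps.
Proof.
  intros Hs Hm Ht Hs1 eps He.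
  assert (Ha0 : 0 <= a0) by (destruct Hm as [_ [_ H]]; destruct (H 1 Rlt_0_1); lra).
  exists (Rmax 1 (Rmax (2 * sum_n_m b 1 m) (10 * a0 / eps))).
  split. apply Rlt_le_trans with 1. lra. apply Rmax_l.
  intros u v Hu Huv.
  assert (H1 := Rmax_l 1 (Rmax (2 * sum_n_m b 1 m) (10 * a0 / eps))).
  assert (H2 := Rmax_r 1 (Rmax (2 * sum_n_m b 1 m) (10 * a0 / eps))).
  assert (H3 := Rmax_l (2 * sum_n_m b 1 m) (10 * a0 / eps)).
  assert (H4 := Rmax_r (2 * sum_n_m b 1 m) (10 * a0 / eps)).
  eapply Rle_trans. apply (IB_FD _ _ _ _ _ _ _ a0 u v (1/2) (/ u)); auto; try lra.
  left. intros x Hx. apply hh_large; auto; lra.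
  intros y Hy. eapply Rle_trans. apply qf_le_inv; auto; lra. apply Rinv_le_contravar; lra.
  replace (5 * a0 * / u / (1 / 2)) with (10 * a0 / u) by (field; lra).
  apply Rmult_le_reg_r with u. lra. unfold Rdiv. rewrite Rmult_assoc, Rinv_l by lra.
  assert (10 * a0 / eps <= u) by lra.
  apply Rmult_le_reg_r with (/ eps). apply Rinv_0_lt_compat; lra.
  replace (eps * u * / eps) with u by (field; lra). unfold Rdiv in *. lra.
Qed.

Lemma improper_F s m b sg tau om a0 th K : Hsb m b sg -> Hom a0 om -> 0 <= tau -> (s = 1 \/ s = -1) ->
  (forall u v, 0 < u -> u <= v -> Rabs (RInt (Fth s m b sg tau om th) u v) <= K) ->
  exists I, filterlim (fun ab : R * R => RInt (Fth s m b sg tau om th) (fst ab) (snd ab))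
     (filter_prod (at_right 0) (Rbar_locally p_infty)) (locally I) /\ Rabs I <= K.
Proof.
  intros Hs Hm Ht Hs1 HK. apply (improper_R _ K a0); auto.
  - intros; apply (Fth_cont _ _ _ _ _ _ _ a0); auto.
  - intros x Hx. unfold Fth. rewrite Rabs_mult.
    assert (Rabs (psi tau om x) <= a0) by (apply psi_bound; auto; lra).
    assert (Rabs (cos (phase s m b sg x + th)) <= 1) by apply Rabs_cos_le_1.
    assert (0 <= Rabs (psi tau om x)) by apply Rabs_pos.
    assert (0 <= Rabs (cos (phase s m b sg x + th))) by apply Rabs_pos. nra.
  - apply (tail_bound _ _ _ _ _ _ a0); auto.
Qed.

Lemma Cmod_le_sum (x y : R) : Cmod (x, y) <= Rabs x + Rabs y.
Proof.
  unfold Cmod. change (sqrt (x ^ 2 + y ^ 2) <= Rabs x + Rabs y).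
  rewrite <- (sqrt_pow2 (Rabs x + Rabs y)) by (generalize (Rabs_pos x) (Rabs_pos y); lra).
  apply sqrt_le_1_alt.
  rewrite <- (pow2_abs x), <- (pow2_abs y).
  generalize (Rabs_pos x) (Rabs_pos y). intros. nra.
Qed.

Lemma cos_shift' y : cos (y + - (PI / 2)) = sin y.
Proof.
  replace (y + - (PI / 2)) with (- (PI / 2 - y)) by ring. rewrite cos_neg. apply cos_shift.
Qed.

Lemma combine (ps : R -> R) s m b sg tau om a0 K :
  Hsb m b sg -> Hom a0 om -> 0 <= tau -> (s = 1 \/ s = -1) ->
  (forall x, 0 < x -> ps x = psi tau om x) ->
  (forall th u v, 0 < u -> u <= v -> Rabs (RInt (Fth s m b sg tau om th) u v) <= K) ->
  exists I, improper_int_0_oo (osc (phase s m b sg) ps) I /\ Cmod I <= 2 * K.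
Proof.
  intros Hs Hm Ht Hs1 Hps HK.
  destruct (improper_F s m b sg tau om a0 0 K) as [I1 [HI1 HB1]]; auto.
  destruct (improper_F s m b sg tau om a0 (- (PI / 2)) K) as [I2 [HI2 HB2]]; auto.
  exists (I1, I2). split.
  - assert (H := improper_C _ _ I1 I2 (fun x Hx => conj (Fth_cont s m b sg tau om 0 a0 x Hs Hm Ht Hx)
                                                    (Fth_cont s m b sg tau om (- (PI / 2)) a0 x Hs Hm Ht Hx)) HI1 HI2).
    unfold improper_int_0_oo in *.
    eapply is_RInt_gen_ext; [ | exact H].
    apply (Filter_prod _ _ _ (fun a => 0 < a) (fun b => 0 < b)).
    + exists (mkposreal 1 Rlt_0_1). intros y Hy Hy0. auto.
    + exists 0. auto.
    + intros a c Ha Hc x Hx. simpl in Hx.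
      assert (0 < x) by (apply Rle_lt_trans with (Rmin a c); [apply Rmin_glb; lra | lra]).
      unfold Fth, osc. rewrite Hps by auto. rewrite Rplus_0_r, cos_shift'. reflexivity.
  - eapply Rle_trans. apply Cmod_le_sum. lra.
Qed.

Lemma Rpower_quarter x : 0 < x -> Rpower x (1/4) = sqrt (sqrt x).
Proof.
  intros Hx. replace (1/4) with (/2 * /2) by field.
  rewrite <- Rpower_mult. rewrite (Rpower_sqrt x Hx). apply Rpower_sqrt. apply sqrt_lt_R0; auto.
Qed.

Lemma Rpower_3_2 x : 0 < x -> Rpower x (3/2) = x * sqrt x.
Proof.
  intros Hx. replace (3/2) with (1 + /2) by field.
  rewrite Rpower_plus, Rpower_1, Rpower_sqrt; auto.
Qed.

Theorem lemma6p1 :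
  forall a0 : R,
  exists C0 : R,
  forall omega : R -> R,
    (forall l, 0 < l -> ex_derive omega l /\ ex_derive (Derive omega) l) ->
    ((forall x y, 0 < x -> x <= y -> omega x <= omega y) \/
     (forall x y, 0 < x -> x <= y -> omega y <= omega x)) ->
    (forall l, 0 < l -> 0 <= omega l) ->
    (forall (j : nat) l, (j <= 2)%nat -> 0 < l ->
       Rabs (Derive_n omega j l) <= a0 / l ^ j) ->
  forall (m k : nat) (sigma b : nat -> R) (s : R),
    (1 <= m)%nat -> (1 <= k <= m)%nat ->
    (forall j, (1 <= j < m)%nat -> sigma (S j) <= sigma j) ->
    0 <= sigma m ->
    (forall j, (1 <= j <= m)%nat -> 0 < b j) ->
    (s = 1 \/ s = -1) ->
    (exists I : C,
       improper_int_0_oo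
         (osc (phase s m b sigma)
              (fun l => l / sqrt (l ^ 2 + sigma k) * omega l)) I /\
       Cmod I <= C0 * Rmin (Rpower (1 + sigma 1%nat) (1/4))
                           (Rpower (INR m) (3/2) * / b k * max_1n b m)) /\
    (exists I : C,
       improper_int_0_oo (osc (phase s m b sigma) omega) I /\
       Cmod I <= C0 * Rpower (1 + sigma 1%nat) (1/4)).
Proof.
  intros a0. exists (200 * a0).
  intros omega Hd Hmono Hnn Hbnd m k sigma b s Hm Hk Hsigma Hsm Hb Hs.
  assert (Hom0 : Hom a0 omega).
  { split; auto. split; auto. intros l Hl. split; auto.
    assert (H := Hbnd 0%nat l ltac:(lia) Hl). simpl in H. rewrite Rdiv_1_r in H.
    apply Rabs_le_between in H. lra. }
  assert (Ha0 : 0 <= a0) by (destruct Hom0 as [_ [_ H]]; destruct (H 1 Rlt_0_1); lra).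
  assert (Hmo := sigma_mono sigma m Hsigma).
  assert (Hsb0 : Hsb m b sigma).
  { split; auto. intros j Hj. apply Rle_trans with (sigma m); auto.
    replace m with (j + (m - j))%nat at 1 by lia. apply Hmo; lia. }
  assert (Hsig0 : Hsig m sigma).
  { split. apply (proj1 Hsb0); lia. intros j Hj. replace j with (1 + (j - 1))%nat at 1 by lia. apply Hmo; lia. }
  assert (Hs1 : 0 <= sigma 1%nat) by apply Hsig0.
  destruct (L_facts (sigma 1%nat) Hs1) as [HL [HL2 HL4]].
  rewrite Rpower_quarter by lra. rewrite Rpower_3_2 by (apply (lt_INR 0); lia).
  set (L := sqrt (sqrt (1 + sigma 1%nat))) in *.
  set (Bq := INR m * sqrt (INR m) * / b k * max_1n b m).
  assert (HBq : 1 <= Bq).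
  { assert (Hbk : 0 < b k) by (apply Hb; lia).
    assert (HbM : b k <= max_1n b m) by (apply max_1n_ge; lia).
    assert (Hn : 1 <= INR m) by (apply (le_INR 1); lia).
    assert (Hsn : 1 <= sqrt (INR m)) by (apply Rle_trans with (sqrt 1); [rewrite sqrt_1; lra | apply sqrt_le_1_alt; lra]).
    unfold Bq. assert (1 <= / b k * max_1n b m).
    { apply Rmult_le_reg_l with (b k); auto. rewrite <- Rmult_assoc, Rinv_r by lra. lra. }
    assert (1 <= INR m * sqrt (INR m)) by nra.
    replace (INR m * sqrt (INR m) * / b k * max_1n b m) with ((INR m * sqrt (INR m)) * (/ b k * max_1n b m)) by ring. nra. }
  assert (HkS : 0 <= sigma k) by (apply (proj1 Hsb0); lia).
  split.
  - destruct (combine (fun l => l / sqrt (l ^ 2 + sigma k) * omega l) s m b sigma (sigma k) omega a0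
                (100 * a0 * Rmin L Bq)) as [I [HI HIb]]; auto.
    + intros th u v Hu Huv. destruct Hs as [E|E]; subst s.
      * eapply Rle_trans. apply (P_bound _ _ _ _ _ a0); auto.
        assert (1 <= Rmin L Bq) by (apply Rmin_glb; lra). nra.
      * apply Rmin_case_strong; intros _.
        -- eapply Rle_trans. apply (A_bound _ _ _ _ _ a0); auto. fold L. nra.
        -- eapply Rle_trans. apply (B_bound _ _ _ _ a0); auto. fold Bq. nra.
    + exists I. split; auto. lra.
  - destruct (combine omega s m b sigma 0 omega a0 (100 * a0 * L)) as [I [HI HIb]]; auto; try lra.
    + intros x Hx. unfold psi. rewrite Rplus_0_r. rewrite sqrt_pow2 by lra. field. lra.
    + intros th u v Hu Huv. destruct Hs as [E|E]; subst s.
      * eapply Rle_trans. apply (P_bound _ _ _ _ _ a0); auto; lra. nra.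
      * eapply Rle_trans. apply (A_bound _ _ _ _ _ a0); auto; lra. fold L. nra.
    + exists I. split; auto. lra.
Qed.
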